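(* Let $L\ne\{0,1\}$ be a sharp C-lattice domain in which every element is a join of principal elements. Then for every maximal element $m$ of $L$, the localization $L_m$ is isomorphic to $\mathbb{Z}_-$ or to $\mathbb{R}_1$, and $L$ is a one-dimensional Prüfer lattice (every compact element is principal, and every nonzero prime element is maximal).
   Context: A multiplicative lattice is a complete lattice $(L,\le)$ with bottom $0$ and top $1$ which is also a commutative monoid with identity $1$ such that $a(\bigvee_\alpha b_\alpha)=\bigvee_\alpha(ab_\alpha)$ for all $a,b_\alpha\in L$. For $x,y\in L$, $(y:x)=\bigvee\{a\in L: ax\le y\}$. An element $c$ is compact if $c\le\bigvee S$ implies $c\le\bigvee T$ for some finite $T\subseteq S$. A C-lattice is a multiplicative lattice in which $1$ is compact, the product of two compact elements is compact, and every element is a join of compact elements; $L^*$ denotes its compact elements. A proper element $p\ne1$ is prime if $xy\le p$ implies $x\le p$ or $y\le p$; maximal elements are maximal in $L\setminus\{1\}$; $L$ is a domain if $0$ is prime. An element $x$ is principal if $y\wedge zx=((y:x)\wedge z)x$ and $y\vee(z:x)=((yx\vee z):x)$ for all $y,z\in L$. $L$ is sharp if whenever $a_1a_2\le b$ with $a_1,a_2,b\in L$, there exist $b_1,b_2\in L$ with $a_i\le b_i$ ($i=1,2$) and $b=b_1b_2$. For $p$ prime and $x\in L$, $x_p=\bigvee\{a\in L^*: as\le x \text{ for some } s\in L^*,\ s\not\le p\}$, and $L_p=\{x_p:x\in L\}$ is a lattice with multiplication $(x,y)\mapsto(xy)_p$ and the induced order. $\mathbb{Z}_-$ is the set of integers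 $\le0$ together with $-\infty$, with the usual order and addition as multiplication. $\mathbb{R}_1$ is the set of all intervals $(r,\infty]$ and $[r,\infty]$ with $r\ge0$ real, together with $\{\infty\}$, ordered by inclusion with interval addition as multiplication (isomorphic to the ideal lattice of a valuation domain with value group $\mathbb{R}$). *)

(* Defs.v *)
From Stdlib Require Import Reals ZArith List.
From Coquelicot Require Import Rbar.
Set Implicit Arguments.

Record mlattice := MLattice {
  car :> Type;
  le : car -> car -> Prop;
  sup : (car -> Prop) -> car;
  mul : car -> car -> car;
  one : car;
  le_refl : forall x, le x x;
  le_trans : forall x y z, le x y -> le y z -> le x z;
  le_antisym : forall x y, le x y -> le y x -> x = y;
  sup_ub : forall (S : car -> Prop) x, S x -> le x (sup S);
  sup_least : forall (S : car -> Prop) y, (forall x, S x -> le x y) -> le (sup S) y;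
  le_one : forall x, le x one;
  mulA : forall x y z, mul x (mul y z) = mul (mul x y) z;
  mulC : forall x y, mul x y = mul y x;
  mul1 : forall x, mul one x = x;
  mul_sup : forall a (S : car -> Prop),
      mul a (sup S) = sup (fun y => exists x, S x /\ y = mul a x)
}.

Arguments le {m}.
Arguments sup {m}.
Arguments mul {m}.
Arguments one {m}.

Section Defs.
Variable L : mlattice.

Definition zero : L := sup (fun _ => False).
Definition join (a b : L) : L := sup (fun x => x = a \/ x = b).
Definition meet (a b : L) : L := sup (fun x => le x a /\ le x b).
Definition colon (y x : L) : L := sup (fun a => le (mul a x) y).

Definition lcompact (c : L) : Prop :=
  forall S : L -> Prop, le c (sup S) ->
    exists T : list L, (forall t, In t T -> S t) /\ le c (sup (fun t => In t T)).

Definition C_lattice : Prop :=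
  lcompact one /\
  (forall a b : L, lcompact a -> lcompact b -> lcompact (mul a b)) /\
  (forall x : L, exists S : L -> Prop, (forall c, S c -> lcompact c) /\ x = sup S).

Definition prime (p : L) : Prop :=
  p <> one /\ forall x y : L, le (mul x y) p -> le x p \/ le y p.

Definition maximal (m : L) : Prop :=
  m <> one /\ forall x : L, le m x -> x <> one -> x = m.

Definition domain : Prop := prime zero.

Definition principal (x : L) : Prop :=
  forall y z : L,
    meet y (mul z x) = mul (meet (colon y x) z) x /\
    join y (colon z x) = colon (join (mul y x) z) x.

Definition sharp : Prop :=
  forall a1 a2 b : L, le (mul a1 a2) b ->
    exists b1 b2, le a1 b1 /\ le a2 b2 /\ b = mul b1 b2.

Definition loc (p x : L) : L :=
  sup (fun a : L => lcompact a /\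
        exists s : L, lcompact s /\ ~ le s p /\ le (mul a s) x).

(** L_p is isomorphic to the multiplicative lattice given by the subset
    [inT] of [T], with order [leT] and multiplication [mulT]: an order
    isomorphism (onto [inT]) from L_p = {x_p : x in L} (induced order)
    carrying the product (x,y) |-> (xy)_p to [mulT]. *)
Definition loc_iso (p : L) (T : Type) (inT : T -> Prop)
    (leT : T -> T -> Prop) (mulT : T -> T -> T) : Prop :=
  exists f : L -> T,
    (forall x, inT (f (loc p x))) /\
    (forall t, inT t -> exists x, f (loc p x) = t) /\
    (forall x y : L, leT (f (loc p x)) (f (loc p y)) <-> le (loc p x) (loc p y)) /\
    (forall x y : L, f (loc p (mul (loc p x) (loc p y)))
                 = mulT (f (loc p x)) (f (loc p y))).
End Defs.

(** * The lattice Z_- : integers <= 0 together with -oo (encoded as None). *)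
Definition Zm_in (t : option Z) : Prop :=
  match t with Some z => (z <= 0)%Z | None => True end.
Definition Zm_le (s t : option Z) : Prop :=
  match s, t with
  | None, _ => True
  | Some _, None => False
  | Some a, Some b => (a <= b)%Z
  end.
Definition Zm_mul (s t : option Z) : option Z :=
  match s, t with
  | Some a, Some b => Some (a + b)%Z
  | _, _ => None
  end.

(** * The lattice R_1 : subsets of [0, oo] of the form (r,oo], [r,oo] (r >= 0)
    or {oo}, ordered by inclusion, with interval addition. *)
Definition R1_in (A : Rbar -> Prop) : Prop :=
  (exists r : R, (0 <= r)%R /\ A = (fun x => Rbar_lt (Finite r) x)) \/
  (exists r : R, (0 <= r)%R /\ A = (fun x => Rbar_le (Finite r) x)) \/
  A = (fun x => x = p_infty).
Definition R1_le (A B : Rbar -> Prop) : Prop := forall x, A x -> B x.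
Definition R1_mul (A B : Rbar -> Prop) : Rbar -> Prop :=
  fun z => exists a b, A a /\ B b /\ z = Rbar_plus a b.

(* Main.v *)
Require Import Defs.
From Stdlib Require Import Reals ZArith List.
From Coquelicot Require Import Rbar.
From Stdlib Require Import Lia Lra Classical ClassicalEpsilon FunctionalExtensionality PropExtensionality ProofIrrelevance.

Notation "x <== y" := (le x y) (at level 70).
Notation "x ** y" := (mul x y) (at level 40, left associativity).

Section Basics.
Context {L : mlattice}.
Implicit Types x y z a b c d : L.

Lemma lr x : x <== x. Proof. apply le_refl. Qed.
Lemma ltr x y z : x <== y -> y <== z -> x <== z. Proof. apply le_trans. Qed.
Lemma las x y : x <== y -> y <== x -> x = y. Proof. apply le_antisym. Qed.
Lemma lsub (S : L -> Prop) x : S x -> x <== sup S. Proof. apply sup_ub. Qed.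
Lemma lsubt (S : L -> Prop) x y : S x -> y <== x -> y <== sup S.
Proof. intros; eapply ltr; [eassumption| apply lsub; auto]. Qed.
Lemma supl (S : L -> Prop) y : (forall x, S x -> x <== y) -> sup S <== y.
Proof. apply sup_least. Qed.
Lemma l1 x : x <== one. Proof. apply le_one. Qed.
Lemma z0 x : zero L <== x. Proof. unfold zero; apply supl; intros ? []. Qed.
Lemma lez x : x <== zero L -> x = zero L. Proof. intros; apply las; auto using z0. Qed.
Lemma ge1 x : one <== x -> x = one. Proof. intros; apply las; auto using l1. Qed.

Lemma joinl a b : a <== join L a b. Proof. apply lsub; auto. Qed.
Lemma joinr a b : b <== join L a b. Proof. apply lsub; auto. Qed.
Lemma joinle a b c : a <== c -> b <== c -> join L a b <== c.
Proof. intros; apply supl; intros x [->| ->]; auto. Qed.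
Lemma joinm a b c d : a <== c -> b <== d -> join L a b <== join L c d.
Proof. intros; apply joinle; eapply ltr; eauto using joinl, joinr. Qed.
Lemma joinC a b : join L a b = join L b a.
Proof. apply las; apply joinle; auto using joinl, joinr. Qed.
Lemma join_eq a b : a <== b -> join L a b = b.
Proof. intros; apply las; auto using joinr. apply joinle; auto using lr. Qed.
Lemma join0 a : join L (zero L) a = a.
Proof. apply join_eq, z0. Qed.

Lemma meetl a b : meet L a b <== a. Proof. apply supl; intros x [? ?]; auto. Qed.
Lemma meetr a b : meet L a b <== b. Proof. apply supl; intros x [? ?]; auto. Qed.
Lemma lemeet a b c : c <== a -> c <== b -> c <== meet L a b.
Proof. intros; apply lsub; auto. Qed.
Lemma meet_eq a b : a <== b -> meet L a b = a.
Proof. intros; apply las; auto using meetl. apply lemeet; auto using lr. Qed.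
Lemma meetC a b : meet L a b = meet L b a.
Proof. apply las; apply lemeet; auto using meetl, meetr. Qed.
Lemma meet1 a : meet L a one = a.
Proof. apply meet_eq, l1. Qed.

Lemma mul_sup_le a (S : L -> Prop) z :
  (forall x, S x -> a ** x <== z) -> a ** sup S <== z.
Proof. intros H. rewrite mul_sup. apply supl. intros y [x [Hx ->]]. auto. Qed.
Lemma mulr_mono a b c : a <== b -> c ** a <== c ** b.
Proof.
  intros H. replace b with (join L a b) by (apply join_eq; auto).
  unfold join. rewrite mul_sup. apply lsub. exists a; auto.
Qed.
Lemma mull_mono a b c : a <== b -> a ** c <== b ** c.
Proof. intros; rewrite (mulC _ a), (mulC _ b); apply mulr_mono; auto. Qed.
Lemma mul_mono a b c d : a <== b -> c <== d -> a ** c <== b ** d.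
Proof. intros; eapply ltr; [apply mull_mono; eauto| apply mulr_mono; auto]. Qed.
Lemma mul1r x : x ** one = x. Proof. rewrite mulC; apply mul1. Qed.
Lemma mulle_l a b : a ** b <== a.
Proof. rewrite <- (mul1r a) at 2. apply mulr_mono, l1. Qed.
Lemma mulle_r a b : a ** b <== b.
Proof. rewrite mulC; apply mulle_l. Qed.
Lemma mul0 a : a ** zero L = zero L.
Proof. apply lez. apply mulle_r. Qed.
Lemma mul0l a : zero L ** a = zero L.
Proof. rewrite mulC; apply mul0. Qed.
Lemma mul_join c a b : c ** join L a b = join L (c ** a) (c ** b).
Proof.
  apply las.
  - apply mul_sup_le. intros x [-> | ->]; auto using joinl, joinr.
  - apply joinle; apply mulr_mono; auto using joinl, joinr.
Qed.
Lemma mul_joinl a b c : join L a b ** c = join L (a ** c) (b ** c).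
Proof. rewrite mulC, mul_join, (mulC _ c a), (mulC _ c b); auto. Qed.
Lemma mulAC a b c : a ** b ** c = a ** c ** b.
Proof. rewrite <- !mulA, (mulC _ b c); auto. Qed.

Lemma colon_spec y x a : a <== colon L y x <-> a ** x <== y.
Proof.
  split; intros H.
  - eapply ltr; [apply mull_mono; eauto|]. rewrite mulC. apply mul_sup_le.
    intros b Hb. rewrite mulC; auto.
  - apply lsub; auto.
Qed.
Lemma colon_mul y x : colon L y x ** x <== y.
Proof. apply colon_spec, lr. Qed.
Lemma colon_ge y x : x <== y -> colon L y x = one.
Proof. intros; apply ge1, colon_spec. rewrite mul1; auto. Qed.
Lemma le_colon y x : y <== colon L y x.
Proof. apply colon_spec, mulle_l. Qed.
Lemma colon_in y x a : a ** x <== y -> a <== colon L y x.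
Proof. apply colon_spec. Qed.
Lemma colon_out y x a : a <== colon L y x -> a ** x <== y.
Proof. apply colon_spec. Qed.
Lemma colon_colon z x y : colon L (colon L z x) y = colon L z (x ** y).
Proof.
  apply las.
  - apply colon_in. rewrite (mulC _ x y), mulA. apply colon_out, colon_out, lr.
  - apply colon_in, colon_in. rewrite <- mulA, (mulC _ y x). apply colon_out, lr.
Qed.
Lemma colon_mono_l y y' x : y <== y' -> colon L y x <== colon L y' x.
Proof. intros; apply colon_spec; eapply ltr; [apply colon_mul| auto]. Qed.
Lemma colon_anti x x' y : x <== x' -> colon L y x' <== colon L y x.
Proof. intros; apply colon_spec; eapply ltr; [apply mulr_mono; eauto| apply colon_mul]. Qed.

Definition lsup (T : list L) : L := sup (fun t => In t T).
Lemma lsup_nil : lsup nil = zero L.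
Proof. apply las; apply supl; intros ? []. Qed.
Lemma lsup_cons a T : lsup (a :: T) = join L a (lsup T).
Proof.
  apply las.
  - apply supl. intros t [->| Ht]; [apply joinl|]. eapply ltr; [|apply joinr]. apply lsub; auto.
  - apply joinle. apply lsub; left; auto. apply supl; intros t Ht; apply lsub; right; auto.
Qed.
Lemma lsup_le T y : (forall t, In t T -> t <== y) -> lsup T <== y.
Proof. apply supl. Qed.

Lemma compact_join a b : lcompact L a -> lcompact L b -> lcompact L (join L a b).
Proof.
  intros Ha Hb S HS.
  destruct (Ha S) as [T1 [H1 H1']]. eapply ltr; [apply joinl| eauto].
  destruct (Hb S) as [T2 [H2 H2']]. eapply ltr; [apply joinr| eauto].
  exists (T1 ++ T2). split. intros t Ht; apply in_app_or in Ht; destruct Ht; auto.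
  apply joinle; [eapply ltr; [apply H1'|] | eapply ltr; [apply H2'|]];
    apply supl; intros t Ht; apply lsub; apply in_or_app; auto.
Qed.
Lemma compact_zero : lcompact L (zero L).
Proof. intros S _. exists nil. split. intros _ []. apply z0. Qed.
Lemma compact_lsup T : (forall t, In t T -> lcompact L t) -> lcompact L (lsup T).
Proof.
  induction T; intros H. rewrite lsup_nil; apply compact_zero.
  rewrite lsup_cons. apply compact_join; simpl in *; auto.
Qed.

Fixpoint pw x (n : nat) : L := match n with O => one | S n => x ** pw x n end.
Lemma pw_add x n k : pw x (n + k) = pw x n ** pw x k.
Proof. induction n; simpl. rewrite mul1; auto. rewrite IHn, mulA; auto. Qed.
Lemma pw_mul x y n : pw (x ** y) n = pw x n ** pw y n.
Proof. induction n; simpl. rewrite mul1; auto. rewrite IHn. rewrite <- !mulA. f_equal.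
  rewrite !mulA, (mulC _ y (pw x n)); auto. Qed.
Lemma pw_mono x y n : x <== y -> pw x n <== pw y n.
Proof. induction n; simpl; intros; auto using lr. apply mul_mono; auto. Qed.
Lemma pw_anti x n k : (n <= k)%nat -> pw x k <== pw x n.
Proof. intros H. replace k with (n + (k - n))%nat by lia. rewrite pw_add. apply mulle_l. Qed.
Lemma pw_pw x n k : pw (pw x n) k = pw x (n * k).
Proof. induction k; simpl. replace (n*0)%nat with 0%nat by lia; auto.
  replace (n * S k)%nat with (n + n * k)%nat by lia. rewrite pw_add, IHk; auto. Qed.
End Basics.


Section Principal.
Context {L : mlattice}.
Hypothesis Hdom : domain L.
Implicit Types x y z a b c d u v w : L.

Lemma joinz a : join L a (zero L) = a.
Proof. rewrite joinC; apply join0. Qed.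
Lemma join1 a : join L a one = one.
Proof. apply ge1, joinr. Qed.
Lemma z_ne_1 : zero L <> one.
Proof. destruct Hdom; auto. Qed.
Lemma dom_mul a b : a ** b <== zero L -> a = zero L \/ b = zero L.
Proof. intros H. destruct Hdom as [_ Hd]. destruct (Hd a b H); [left|right]; apply lez; auto. Qed.
Lemma mul_nz a b : a <> zero L -> b <> zero L -> a ** b <> zero L.
Proof. intros Ha Hb E. destruct (dom_mul a b); auto. rewrite E; apply lr. Qed.
Lemma pw_nz a n : a <> zero L -> pw a n <> zero L.
Proof. induction n; simpl; intros; auto using mul_nz. intro E; apply z_ne_1; auto. Qed.
Lemma nz_of_le a b : a <== b -> a <> zero L -> b <> zero L.
Proof. intros H Ha E; subst; apply Ha, lez; auto. Qed.
Lemma colon0 x : x <> zero L -> colon L (zero L) x = zero L.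
Proof. intros Hx. apply lez. destruct (dom_mul (colon L (zero L) x) x (colon_mul _ _)) as [->| ]; [apply lr| contradiction]. Qed.

Lemma pr_meet x y z : principal L x -> meet L y (z ** x) = meet L (colon L y x) z ** x.
Proof. intros H; apply H. Qed.
Lemma pr_join x y z : principal L x -> join L y (colon L z x) = colon L (join L (y ** x) z) x.
Proof. intros H; apply H. Qed.
Lemma wmp x y : principal L x -> y <== x -> y = colon L y x ** x.
Proof. intros H Hy. generalize (pr_meet x y one H). rewrite mul1, meet_eq, meet1; auto. Qed.
Lemma cancel_colon x y : principal L x -> x <> zero L -> colon L (y ** x) x = y.
Proof. intros H Hx. generalize (pr_join x y (zero L) H). rewrite colon0, !joinz; auto. Qed.
Lemma cancel x y z : principal L x -> x <> zero L -> y ** x <== z ** x -> y <== z.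
Proof. intros H Hx Hy. rewrite <- (cancel_colon x z); auto. apply colon_in; auto. Qed.
Lemma cancel_eq x y z : principal L x -> x <> zero L -> y ** x = z ** x -> y = z.
Proof. intros H Hx E; apply las; eapply cancel; eauto; rewrite E; apply lr. Qed.

Lemma principal_one : principal L one.
Proof.
  intros y z. rewrite !mul1r. split.
  - f_equal. apply las. apply colon_in; rewrite mul1r; apply lr.
    rewrite <- (mul1r (colon L y one)). apply colon_out, lr.
  - assert (E : forall w, colon L w one = w).
    { intros w; apply las. rewrite <- (mul1r (colon L w one)). apply colon_out, lr.
      apply colon_in; rewrite mul1r; apply lr. }
    rewrite !E; auto.
Qed.
Lemma principal_zero : principal L (zero L).
Proof.
  intros y z. rewrite !mul0. split.
  - apply lez. apply meetr.
  - rewrite !colon_ge by apply z0. apply join1.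
Qed.
Lemma principal_mul x y : principal L x -> principal L y -> principal L (x ** y).
Proof.
  intros Hx Hy w z. split.
  - rewrite (mulA _ z x y). rewrite (pr_meet y) by auto. rewrite (pr_meet x) by auto.
    rewrite colon_colon, (mulC _ y x), mulA. reflexivity.
  - rewrite <- (colon_colon z x y). rewrite (pr_join y) by auto. rewrite (pr_join x) by auto.
    rewrite colon_colon. f_equal. f_equal. rewrite (mulC _ x y), mulA; auto.
Qed.
Lemma principal_pw x n : principal L x -> principal L (pw x n).
Proof. induction n; simpl; auto using principal_one, principal_mul. Qed.

Section Factor.
Variables (p b c : L).
Hypotheses (Hp : principal L p) (Hp0 : p <> zero L) (Hbc : b ** c = p).
Lemma fac_cancel_c u u' : c ** u <== c ** u' -> u <== u'.
Proof.
  intros H. apply (cancel p); auto. rewrite (mulC _ u), (mulC _ u'), <- Hbc, <- !mulA.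
  apply mulr_mono; auto.
Qed.
Lemma fac_cancel_b u u' : b ** u <== b ** u' -> u <== u'.
Proof.
  intros H. apply (cancel p); auto. rewrite (mulC _ u), (mulC _ u'), <- Hbc, (mulC _ b c), <- !mulA.
  apply mulr_mono; auto.
Qed.
Lemma fac_wmp v : v <== b -> v = colon L v b ** b.
Proof.
  intros Hv.
  assert (E : v ** c = colon L (v ** c) p ** p).
  { apply wmp; auto. rewrite <- Hbc. apply mull_mono; auto. }
  set (s := colon L (v ** c) p) in *. clearbody s.
  assert (E2' : c ** v = c ** (s ** b)).
  { rewrite (mulC _ c v), E, (mulC _ c (_ ** b)), <- Hbc, mulA. reflexivity. }
  assert (E2 : v = s ** b).
  { apply las; apply (fac_cancel_c); rewrite E2'; apply lr. }
  apply las.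
  - rewrite E2 at 1. apply mull_mono. apply colon_in. rewrite <- E2. apply lr.
  - apply colon_mul.
Qed.
Lemma factor_principal : principal L b.
Proof.
  intros y w. split.
  - apply las.
    + set (v := meet L y (w ** b)).
      assert (Hv : v <== b) by (eapply ltr; [apply meetr| apply mulle_r]).
      rewrite (fac_wmp v Hv) at 1. apply mull_mono. apply lemeet.
      * apply colon_mono_l, meetl.
      * apply (fac_cancel_b). rewrite (mulC _ b), (mulC _ b w). eapply ltr; [apply colon_mul|].
        unfold v; apply meetr.
    + apply lemeet. eapply ltr; [apply mull_mono, meetl| apply colon_mul].
      apply mull_mono, meetr.
  - apply las.
    + apply joinle. apply colon_in. apply joinl. apply colon_mono_l, joinr.
    + set (t := colon L (join L (y ** b) w) b).
      assert (H1 : t ** p <== join L (y ** p) (w ** c)).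
      { rewrite <- Hbc, !mulA, <- mul_joinl. apply mull_mono. apply colon_mul. }
      apply colon_in in H1. rewrite <- pr_join in H1 by auto.
      eapply ltr; [apply H1|]. apply joinm; [apply lr|].
      apply colon_in. apply (fac_cancel_c). rewrite !(mulC _ c).
      rewrite <- mulA, Hbc. apply colon_mul.
Qed.
Lemma factor_nz : b <> zero L.
Proof. intros E; apply Hp0; rewrite <- Hbc, E, mul0l; auto. Qed.
End Factor.
End Principal.


Definition PG (L : mlattice) : Prop :=
  forall x : L, exists S : L -> Prop, (forall a, S a -> principal L a) /\ x = sup S.

Section Global.
Context {L : mlattice}.
Hypothesis Hdom : domain L.
Hypothesis HC : C_lattice L.
Hypothesis Hsh : sharp L.
Hypothesis HPG : PG L.
Implicit Types x y z a b c d u v w : L.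

Lemma one_compact : lcompact L one.
Proof. apply HC. Qed.

Lemma list_colon_bound x (S : L -> Prop) (T : list L) :
  (forall t, In t T -> exists c, S c /\ t = colon L c x) ->
  exists C : list L, (forall c, In c C -> S c) /\ lsup T ** x <== lsup C.
Proof.
  induction T as [|t T IH]; intros H.
  - exists nil. split. intros _ []. rewrite lsup_nil, mul0l. apply z0.
  - destruct IH as [C [HC1 HC2]]. intros; apply H; right; auto.
    destruct (H t) as [c [Hc ->]]. left; auto.
    exists (c :: C). split. intros c' [<-|]; auto.
    rewrite !lsup_cons, mul_joinl. apply joinm; auto. apply colon_mul.
Qed.

Lemma principal_compact x : principal L x -> lcompact L x.
Proof.
  intros Hx. destruct (classic (x = zero L)) as [->|Hx0]. apply compact_zero.
  destruct HC as [_ [_ Hgen]]. destruct (Hgen x) as [S [HS Ex]].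
  set (Ts := fun a => exists c, S c /\ a = colon L c x).
  assert (Hc : forall c, S c -> c <== x) by (intros; rewrite Ex; apply lsub; auto).
  assert (E : sup Ts ** x = one ** x).
  { rewrite mul1. apply las.
    - rewrite mulC. apply mul_sup_le. intros a [c [Hc' ->]]. rewrite mulC.
      eapply ltr; [apply colon_mul| auto].
    - rewrite Ex at 1. apply supl. intros c Hc'. rewrite (wmp x c Hx (Hc c Hc')).
      apply mull_mono. apply lsub. exists c; auto. }
  apply cancel_eq in E; auto.
  destruct (one_compact Ts) as [T [HT1 HT2]]. rewrite E; apply lr.
  destruct (list_colon_bound x S T HT1) as [C [HC1 HC2]].
  assert (Ex2 : x = lsup C).
  { apply las.
    - eapply ltr; [|apply HC2]. rewrite <- (mul1 _ x) at 1. apply mull_mono; auto.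
    - apply lsup_le; intros; auto. }
  rewrite Ex2. apply compact_lsup. intros c Hc'. apply HS; auto.
Qed.

Lemma compact_principals c : lcompact L c ->
  exists T : list L, (forall t, In t T -> principal L t) /\ c = lsup T.
Proof.
  intros Hc. destruct (HPG c) as [S [HS Ec]].
  destruct (Hc S) as [T [HT1 HT2]]. rewrite <- Ec; apply lr.
  exists T. split; auto. apply las; auto. apply lsup_le. intros t Ht. rewrite Ec. apply lsub; auto.
Qed.


Lemma key_comax u w : principal L u -> principal L w -> u <> zero L ->
  colon L u w <== u -> join L u w = one.
Proof.
  intros Hu Hw Hu0 Huw. apply NNPP; intros Hne.
  set (c := join L u w) in *. set (B := join L u (w ** w)).
  assert (Hwc : w <== c) by apply joinr.
  assert (Huc : u <== c) by apply joinl.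
  assert (HcB : c ** c <== B).
  { unfold c at 2. rewrite mul_join. apply joinle.
    - eapply ltr; [apply mulle_r| apply joinl].
    - unfold c. rewrite mul_joinl. apply joinle.
      + eapply ltr; [apply mulle_l| apply joinl].
      + apply joinr. }
  destruct (Hsh c c B HcB) as [b1 [b2 [H1 [H2 EB]]]].
  assert (HBw : colon L B w <== c).
  { unfold B. rewrite joinC, <- pr_join by auto. unfold c; rewrite (joinC u w).
    apply joinm; auto using lr. }
  assert (Hb2 : b2 <== c).
  { eapply ltr; [|apply HBw]. apply colon_in. rewrite EB, mulC. apply mull_mono.
    eapply ltr; eauto. }
  assert (Hb1 : b1 <== c).
  { eapply ltr; [|apply HBw]. apply colon_in. rewrite EB. apply mulr_mono.
    eapply ltr; eauto. }
  assert (Hu1 : one ** u <== join L (c ** u) (w ** w)).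
  { rewrite mul1. eapply ltr; [apply (joinl u (w ** w))|]. fold B. rewrite EB.
    eapply ltr; [apply mul_mono; eauto|].
    unfold c at 2. rewrite mul_join. apply joinle. apply joinl.
    unfold c at 1. rewrite mul_joinl. apply joinle; [|apply joinr].
    eapply ltr; [|apply joinl]. rewrite (mulC _ u w). apply mull_mono. auto. }
  apply colon_in in Hu1. rewrite <- pr_join in Hu1 by auto.
  set (t := colon L (w ** w) u) in *.
  assert (Ht : t <== w).
  { apply (cancel Hdom u t w Hu Hu0).
    eapply ltr; [apply lemeet; [apply (mulle_r t u)| eapply ltr; [apply colon_mul| apply mulle_l]]|].
    rewrite <- (mul1 _ w) at 1. rewrite pr_meet, meet1 by auto. rewrite (mulC _ w u).
    apply mull_mono; auto. }
  apply Hne. apply ge1. eapply ltr; [apply Hu1|]. apply joinle; auto using lr. eapply ltr; eauto.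
Qed.

Lemma prufer x y : principal L x -> principal L y -> principal L (join L x y).
Proof.
  intros Hx Hy.
  destruct (classic (x = zero L)) as [->|Hx0]. rewrite join0; auto.
  destruct (classic (y = zero L)) as [->|Hy0]. rewrite joinz; auto.
  set (a := join L x y).
  assert (Hax : a ** colon L x a <== x) by (rewrite mulC; apply colon_mul).
  destruct (Hsh _ _ _ Hax) as [b1 [b2 [Ha1 [Ha2 Ex]]]].
  assert (Hb1 : principal L b1) by (apply (factor_principal Hdom x b1 b2); auto).
  assert (Hb2 : principal L b2) by (apply (factor_principal Hdom x b2 b1); auto; rewrite mulC; auto).
  assert (Hb20 : b2 <> zero L) by (apply (factor_nz x b2 b1); auto; rewrite mulC; auto).
  assert (Hyb : y <== b1) by (eapply ltr; [apply joinr| apply Ha1]).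
  pose proof (wmp b1 y Hb1 Hyb) as Ey.
  set (w := colon L y b1) in *.
  assert (Hw : principal L w) by (apply (factor_principal Hdom y w b1); auto).
  assert (Ea : a = b1 ** join L b2 w).
  { rewrite mul_join, <- Ex, (mulC _ b1 w), <- Ey. reflexivity. }
  assert (Huw : colon L b2 w <== b2).
  { set (s := colon L b2 w). eapply ltr; [|apply Ha2]. apply colon_in.
    rewrite Ea. rewrite (mulC _ b1), mulA, Ex. rewrite (mulC _ b1 b2). apply mull_mono.
    rewrite mul_join. apply joinle. apply mulle_r. apply colon_mul. }
  rewrite (key_comax b2 w) in Ea; auto. rewrite mul1r in Ea. fold a. rewrite Ea; auto.
Qed.

Lemma compact_principal c : lcompact L c -> principal L c.
Proof.
  intros Hc. destruct (compact_principals c Hc) as [T [HT ->]]. clear Hc.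
  induction T as [|t T IH]. rewrite lsup_nil; apply principal_zero.
  rewrite lsup_cons. apply prufer. apply HT; left; auto. apply IH. intros; apply HT; right; auto.
Qed.

Lemma decomp x y : principal L x -> principal L y -> x <> zero L ->
  let b := join L x y in
  principal L b /\ b <> zero L /\ principal L (colon L x b) /\ principal L (colon L y b) /\
  x = colon L x b ** b /\ y = colon L y b ** b /\ join L (colon L x b) (colon L y b) = one.
Proof.
  intros Hx Hy Hx0 b.
  assert (Hb : principal L b) by (apply prufer; auto).
  assert (Hb0 : b <> zero L) by (apply (nz_of_le x); auto; apply joinl).
  assert (Ex : x = colon L x b ** b) by (apply wmp; auto; apply joinl).
  assert (Ey : y = colon L y b ** b) by (apply wmp; auto; apply joinr).
  assert (Hxb : principal L (colon L x b)) by (apply (factor_principal Hdom x _ b); auto).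
  destruct (classic (y = zero L)) as [Hy0|Hy0].
  - assert (Eyb : colon L y b = zero L) by (rewrite Hy0; apply colon0; auto).
    assert (Exb : colon L x b = one) by (apply colon_ge; unfold b; rewrite Hy0, joinz; apply lr).
    rewrite Eyb. split; auto. split; auto. split; auto. split. apply principal_zero.
    split; auto. split. rewrite Hy0, mul0l; auto. rewrite joinz; auto.
  - split; auto. split; auto. split; auto. split. apply (factor_principal Hdom y _ b); auto.
    split; auto. split; auto.
    apply (cancel_eq Hdom b); auto. rewrite mul_joinl, <- Ex, <- Ey, mul1. reflexivity.
Qed.

Lemma krull q x : principal L q -> q <> one -> principal L x -> x <> zero L ->
  (forall n, x <== pw q n) -> False.
Proof.
  intros Hq Hq1 Hx Hx0 Hn.
  set (P := sup (fun a => forall n, a <== pw q n)).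
  assert (HP : forall n, P <== pw q n) by (intros n; apply supl; auto).
  assert (HxP : x <== P) by (apply lsub; auto).
  assert (HPx : P ** colon L x P <== x) by (rewrite mulC; apply colon_mul).
  destruct (Hsh _ _ _ HPx) as [b1 [b2 [H1 [H2 Ex]]]].
  assert (Hq0 : q <> zero L).
  { intros E. apply Hx0, lez. eapply ltr; [apply (Hn 1%nat)|]. simpl. rewrite E, mul0l; apply lr. }
  assert (Hb1 : b1 <== P).
  { apply lsub. intros k.
    assert (Ek : x = colon L x (pw q k) ** pw q k) by (apply wmp; auto; apply principal_pw; auto).
    set (r := colon L x (pw q k)) in *.
    assert (Hr : principal L r) by (apply (factor_principal Hdom x r (pw q k)); auto).
    assert (Hr0 : r <> zero L) by (apply (factor_nz x r (pw q k)); auto).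
    assert (Hr2 : r <== b2).
    { eapply ltr; [|apply H2]. apply colon_in. rewrite Ek at 1.
      apply mulr_mono; auto. }
    apply (cancel Hdom r); auto. rewrite (mulC _ (pw q k)), <- Ek, Ex. apply mulr_mono; auto. }
  assert (EP : P = b1) by (apply las; auto).
  assert (HPq : P <== q) by (eapply ltr; [apply (HP 1%nat)| simpl; rewrite mul1r; apply lr]).
  assert (HcP : colon L P q <== P).
  { apply lsub. intros n. eapply ltr; [apply colon_mono_l, (HP (S n))|]. simpl.
    rewrite mulC, cancel_colon by auto. apply lr. }
  assert (HPPq : P <== P ** q).
  { rewrite (wmp q P) at 1 by auto. apply mull_mono; auto. }
  apply Hq1. apply ge1. apply (cancel Hdom x); auto. rewrite mul1. rewrite Ex at 1.
  rewrite <- EP. eapply ltr; [apply mull_mono, HPPq|]. rewrite Ex, <- EP.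
  rewrite (mulC _ P q), <- mulA. apply lr.
Qed.

End Global.


Section RealAux.
Local Open Scope R_scope.
Lemma nat_step (P : nat -> Prop) N : P 0%nat -> ~ P N -> exists k, P k /\ ~ P (S k).
Proof.
  intros H0 HN. induction N. contradiction.
  destruct (classic (P N)) as [H|H]. exists N; auto. apply IHN; auto.
Qed.
Lemma frac_le a b c d : 0 < b -> 0 < d -> a * d <= c * b -> a / b <= c / d.
Proof.
  intros Hb Hd H.
  replace (a / b) with ((a * d) * / (b * d)) by (field; lra).
  replace (c / d) with ((c * b) * / (b * d)) by (field; lra).
  apply Rmult_le_compat_r; auto. left; apply Rinv_0_lt_compat; nra.
Qed.
Lemma INR_pos1 n : (1 <= n)%nat -> 0 < INR n.
Proof. intros; apply lt_0_INR; lia. Qed.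
Lemma small_zero d : (forall n : nat, (1 <= n)%nat -> Rabs d <= 2 / INR n) -> d = 0.
Proof.
  intros H. destruct (Req_dec d 0) as [|Hd]; auto. exfalso.
  assert (Hpos : 0 < Rabs d) by (apply Rabs_pos_lt; auto).
  destruct (archimed_cor1 (Rabs d / 2)) as [N [HN1 HN2]]. lra.
  specialize (H N HN2). assert (0 < INR N) by (apply INR_pos1; lia).
  assert (2 / INR N = 2 * / INR N) by (unfold Rdiv; auto). lra.
Qed.
Lemma glb_exists (E : R -> Prop) : (exists x, E x) -> (forall x, E x -> 0 <= x) ->
  exists g, (forall x, E x -> g <= x) /\ (forall b, (forall x, E x -> b <= x) -> b <= g).
Proof.
  intros [x0 Hx0] Hb.
  destruct (completeness (fun y => E (- y))) as [g [Hg1 Hg2]].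
  - exists 0. intros y Hy. specialize (Hb _ Hy). lra.
  - exists (- x0). rewrite Ropp_involutive; auto.
  - exists (- g). split.
    + intros x Hx. assert (- x <= g) by (apply Hg1; rewrite Ropp_involutive; auto). lra.
    + intros b Hbb. assert (g <= - b). { apply Hg2. intros y Hy. specialize (Hbb _ Hy). lra. } lra.
Qed.
End RealAux.
Lemma least_exists (P : nat -> Prop) : (exists k, P k) -> exists k, P k /\ forall j, P j -> (k <= j)%nat.
Proof.
  intros [k Hk]. revert Hk. pattern k. apply (well_founded_ind Wf_nat.lt_wf). clear k.
  intros k IH Hk. destruct (classic (exists j, P j /\ (j < k)%nat)) as [[j [Hj Hjk]]|Hno].
  - apply (IH j Hjk Hj).
  - exists k. split; auto. intros j Hj. destruct (Nat.le_gt_cases k j); auto. exfalso; apply Hno; eauto.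
Qed.


Lemma maximal_prime {L : mlattice} (m : L) : maximal L m -> prime L m.
Proof.
  intros [Hm1 Hm]. split; auto. intros x y Hxy.
  destruct (classic (x <== m)) as [|Hx]; [left; auto| right].
  assert (E : join L m x = one).
  { apply NNPP; intros Hne. apply Hx. rewrite <- (Hm _ (joinl m x) Hne). apply joinr. }
  rewrite <- (mul1r y), <- E, mul_join. apply joinle. apply mulle_r. rewrite mulC; auto.
Qed.

Section Local.
Context {L : mlattice}.
Hypothesis Hdom : domain L.
Hypothesis HC : C_lattice L.
Hypothesis Hsh : sharp L.
Hypothesis HPG : PG L.
Variable m : L.
Hypothesis Hm : prime L m.
Implicit Types x y z a b c d u v w s t : L.

Definition unit_ s := lcompact L s /\ ~ s <== m.
Notation lc := (loc L m).

Lemma m_ne1 : m <> one. Proof. apply Hm. Qed.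
Lemma unit_one : unit_ one.
Proof. split. apply HC. intro H; apply m_ne1, ge1; auto. Qed.
Lemma unit_mul s t : unit_ s -> unit_ t -> unit_ (s ** t).
Proof.
  intros [Hs Hs'] [Ht Ht']. split. apply HC; auto.
  intros H. destruct (proj2 Hm s t H); auto.
Qed.
Lemma unit_principal s : principal L s -> ~ s <== m -> unit_ s.
Proof. intros; split; auto. apply principal_compact; auto. Qed.
Lemma gen x : exists S : L -> Prop, (forall c, S c -> lcompact L c) /\ x = sup S.
Proof. apply HC. Qed.

Lemma loc_intro a s x : unit_ s -> a ** s <== x -> a <== lc x.
Proof.
  intros Hs H. destruct (gen a) as [S [HS Ea]]. rewrite Ea. apply supl. intros c Hc.
  apply lsub. split; auto. exists s; split; [apply Hs|split; [apply Hs|]].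
  eapply ltr; [|apply H]. apply mull_mono. rewrite Ea; apply lsub; auto.
Qed.
Lemma loc_ge x : x <== lc x.
Proof. apply (loc_intro x one); [apply unit_one| rewrite mul1r; apply lr]. Qed.
Lemma loc_mono x y : x <== y -> lc x <== lc y.
Proof.
  intros H. apply supl. intros a [Ha [s [Hs1 [Hs2 Has]]]]. apply (loc_intro a s); [split; auto|].
  eapply ltr; eauto.
Qed.
Lemma loc_compact c x : lcompact L c -> c <== lc x -> exists s, unit_ s /\ c ** s <== x.
Proof.
  intros Hc H. destruct (Hc _ H) as [T [HT HcT]].
  assert (G : exists s, unit_ s /\ lsup T ** s <== x).
  { clear HcT. induction T as [|t T IH].
    - exists one. split. apply unit_one. rewrite lsup_nil, mul0l. apply z0.
    - destruct IH as [s [Hs Hs']]. intros; apply HT; right; auto.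
      destruct (HT t (or_introl eq_refl)) as [_ [s' [Hs1 [Hs2 Hts]]]].
      exists (s ** s'). split. apply unit_mul; auto. split; auto.
      rewrite lsup_cons, mul_joinl. apply joinle.
      + rewrite (mulC _ s s'), mulA. eapply ltr; [apply mulle_l| auto].
      + rewrite mulA. eapply ltr; [apply mulle_l|]. auto. }
  destruct G as [s [Hs Hs']]. exists s; split; auto. eapply ltr; [apply mull_mono; eauto| auto].
Qed.

Lemma loc_absorb a s x : unit_ s -> a ** s <== lc x -> a <== lc x.
Proof.
  intros Hs H. destruct (gen a) as [S [HS Ea]]. rewrite Ea. apply supl. intros c Hc.
  assert (Hc' : c ** s <== lc x) by (eapply ltr; [|apply H]; apply mull_mono; rewrite Ea; apply lsub; auto).
  destruct (loc_compact (c ** s) x) as [t [Ht Hct]]; auto. apply HC; auto. apply Hs.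
  apply (loc_intro c (s ** t)). apply unit_mul; auto. rewrite mulA; auto.
Qed.
Lemma loc_idem x : lc (lc x) = lc x.
Proof.
  apply las; [|apply loc_ge]. apply supl. intros a [Ha [s [Hs1 [Hs2 H]]]].
  apply (loc_absorb a s); auto. split; auto.
Qed.
Lemma loc_mul x y : lc x ** lc y <== lc (x ** y).
Proof.
  apply mul_sup_le. intros b [Hb [t [Ht1 [Ht2 Hbt]]]].
  rewrite mulC. apply mul_sup_le. intros a [Ha [s [Hs1 [Hs2 Has]]]].
  apply (loc_intro _ (s ** t)). apply unit_mul; split; auto.
  rewrite mulA, <- (mulA _ b a s), (mulC _ b (a ** s)), <- mulA. apply mul_mono; auto.
Qed.
Lemma loc_mul_loc x y : lc (lc x ** lc y) = lc (x ** y).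
Proof.
  apply las.
  - rewrite <- (loc_idem (x ** y)). apply loc_mono, loc_mul.
  - apply loc_mono, mul_mono; apply loc_ge.
Qed.
Lemma loc_mul_l x y : lc (lc x ** y) = lc (x ** y).
Proof.
  apply las.
  - rewrite <- (loc_mul_loc x y). apply loc_mono, mulr_mono, loc_ge.
  - apply loc_mono, mull_mono, loc_ge.
Qed.
Lemma loc_mul_r x y : lc (x ** lc y) = lc (x ** y).
Proof. rewrite (mulC _ x), loc_mul_l, mulC; auto. Qed.
Lemma loc_unit s : unit_ s -> lc s = one.
Proof. intros Hs. apply ge1. apply (loc_intro one s); auto. rewrite mul1; apply lr. Qed.
Lemma loc_one : lc one = one.
Proof. apply ge1, loc_ge. Qed.
Lemma loc_mul_unit x s : unit_ s -> lc (x ** s) = lc x.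
Proof.
  intros Hs. apply las. apply loc_mono, mulle_l.
  rewrite <- (loc_idem (x ** s)). apply loc_mono. apply (loc_intro x s); auto. apply lr.
Qed.
Lemma loc_le_m x : x <== m -> lc x <== m.
Proof.
  intros H. apply supl. intros a [Ha [s [Hs1 [Hs2 Has]]]].
  destruct (proj2 Hm a s); auto. eapply ltr; eauto. contradiction.
Qed.
Lemma loc_zero : lc (zero L) = zero L.
Proof.
  apply lez. apply supl. intros a [Ha [s [Hs1 [Hs2 Has]]]].
  destruct (dom_mul Hdom a s Has) as [ -> | -> ]. apply lr. exfalso; apply Hs2, z0.
Qed.
Lemma loc_nz x : x <> zero L -> lc x <> zero L.
Proof. intros H E. apply H, lez. rewrite <- E. apply loc_ge. Qed.
Lemma loc_join x y : lc (join L x y) <== lc (join L (lc x) (lc y)).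
Proof. apply loc_mono, joinm; apply loc_ge. Qed.
Lemma loc_join_le x y z : lc x <== lc z -> lc y <== lc z -> lc (join L x y) <== lc z.
Proof.
  intros H1 H2. rewrite <- (loc_idem z). apply loc_mono. apply joinle.
  eapply ltr; [apply loc_ge| auto]. eapply ltr; [apply loc_ge| auto].
Qed.
Lemma loc_cancel x y c : principal L c -> c <> zero L -> lc (x ** c) <== lc (y ** c) -> x <== lc y.
Proof.
  intros Hc Hc0 H. destruct (gen x) as [S [HS Ex]]. rewrite Ex. apply supl. intros a Ha.
  assert (Hac : lcompact L (a ** c)) by (apply HC; auto; apply principal_compact; auto).
  destruct (loc_compact (a ** c) (y ** c)) as [s [Hs Has]]; auto.
  eapply ltr; [|apply H]. eapply ltr; [|apply loc_ge]. apply mull_mono. rewrite Ex; apply lsub; auto.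
  apply (loc_intro a s); auto. apply (cancel Hdom c); auto. rewrite mulAC; auto.
Qed.
Lemma loc_cancel' x y c : principal L c -> c <> zero L -> lc (x ** c) <== lc (y ** c) -> lc x <== lc y.
Proof. intros; rewrite <- (loc_idem y); apply loc_mono; eapply loc_cancel; eauto. Qed.

Definition NP x := principal L x /\ x <> zero L.
Lemma NP_mul x y : NP x -> NP y -> NP (x ** y).
Proof. intros [] []; split. apply principal_mul; auto. apply mul_nz; auto. Qed.
Lemma NP_one : NP one.
Proof. split. apply principal_one. intro E; apply (z_ne_1 Hdom); auto. Qed.
Lemma NP_pw x n : NP x -> NP (pw x n).
Proof. intros [] ; split. apply principal_pw; auto. apply pw_nz; auto. Qed.

Lemma HC_mul a b : NP a -> unit_ b -> lcompact L (a ** b).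
Proof. intros [Ha _] [Hb _]. apply HC; auto. apply principal_compact; auto. Qed.
Lemma loc_cmp a b : NP a -> NP b ->
  (exists r, NP r /\ lc (r ** b) = lc a) \/ (exists r, NP r /\ lc (r ** a) = lc b).
Proof.
  intros [Ha Ha0] [Hb Hb0].
  destruct (decomp Hdom Hsh a b Ha Hb Ha0) as [Hj [Hj0 [Hu [Hw [Ea [Eb E1]]]]]].
  set (j := join L a b) in *. set (u := colon L a j) in *. set (w := colon L b j) in *.
  assert (Hu0 : u <> zero L) by (apply (factor_nz a u j); auto).
  assert (Hw0 : w <> zero L) by (apply (factor_nz b w j); auto).
  destruct (classic (w <== m)) as [Hwm|Hwm].
  - assert (Hum : ~ u <== m).
    { intros Hum. apply m_ne1. apply ge1. rewrite <- E1. apply joinle; auto. }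
    right. exists w. split. split; auto.
    assert (E : w ** a = b ** u) by (rewrite Ea, Eb at 1; rewrite mulA, mulAC; auto).
    rewrite E. apply loc_mul_unit. apply unit_principal; auto.
  - left. exists u. split. split; auto.
    assert (E : u ** b = a ** w) by (rewrite Ea at 1; rewrite Eb, mulA, mulAC; auto).
    rewrite E. apply loc_mul_unit, unit_principal; auto.
Qed.
Lemma loc_total a b : NP a -> NP b -> lc a <== lc b \/ lc b <== lc a.
Proof.
  intros Ha Hb. destruct (loc_cmp a b Ha Hb) as [[r [_ E]]|[r [_ E]]]; [left|right];
    rewrite <- E; apply loc_mono, mulle_r.
Qed.
Lemma loc_div a b : NP a -> NP b -> lc a <== lc b -> exists r, NP r /\ lc (r ** b) = lc a.
Proof.
  intros Ha Hb H. destruct (loc_cmp a b Ha Hb) as [|[r [_ E]]]; auto.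
  exists one. split. apply NP_one. rewrite mul1. apply las; auto. rewrite <- E. apply loc_mono, mulle_r.
Qed.

Lemma lsup_principal_loc (T : list L) : (forall t, In t T -> principal L t) ->
  lsup T = zero L \/ exists t, In t T /\ NP t /\ lc (lsup T) <== lc t.
Proof.
  induction T as [|a T IH]; intros HT. left; apply lsup_nil.
  rewrite lsup_cons.
  destruct IH as [E|[t [Ht [Ht0 Ht1]]]]. intros; apply HT; right; auto.
  - rewrite E, joinz. destruct (classic (a = zero L)) as [ -> |Ha]. left; auto.
    right. exists a. split. left; auto. split. split; auto. apply HT; left; auto. apply lr.
  - destruct (classic (a = zero L)) as [ -> |Ha].
    + right. exists t. split. right; auto. split; auto. rewrite join0; auto.
    + assert (HNa : NP a) by (split; auto; apply HT; left; auto).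
      destruct (loc_total a t HNa Ht0) as [H|H].
      * right. exists t. split. right; auto. split; auto. apply loc_join_le; auto.
      * right. exists a. split. left; auto. split; auto. apply loc_join_le. apply lr.
        eapply ltr; eauto.
Qed.
Lemma compact_below_principals c (S : L -> Prop) : lcompact L c -> (forall t, S t -> principal L t) ->
  c <== sup S -> c = zero L \/ exists t, S t /\ NP t /\ lc c <== lc t.
Proof.
  intros Hc HS H. destruct (Hc S H) as [T [HT HcT]].
  destruct (lsup_principal_loc T) as [E|[t [Ht [Ht0 Ht1]]]]. intros; apply HS, HT; auto.
  left. apply lez. rewrite <- E; auto.
  right. exists t. split; auto. split; auto. eapply ltr; [apply loc_mono; apply HcT| auto].
Qed.
Lemma extract c b1 b2 : lcompact L c -> c <== b1 ** b2 -> c = zero L \/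
  exists p1 p2, principal L p1 /\ principal L p2 /\ p1 <== b1 /\ p2 <== b2 /\ NP (p1 ** p2) /\
    lc c <== lc (p1 ** p2).
Proof.
  intros Hc H. destruct (HPG b1) as [S1 [HS1 E1]]. destruct (HPG b2) as [S2 [HS2 E2]].
  set (S := fun t => exists p1 p2, S1 p1 /\ S2 p2 /\ t = p1 ** p2).
  assert (Hb : b1 ** b2 <== sup S).
  { rewrite E1. rewrite mulC. apply mul_sup_le. intros p1 Hp1. rewrite E2, mulC.
    apply mul_sup_le. intros p2 Hp2. apply lsub. exists p1, p2; auto. }
  assert (HSp : forall t, S t -> principal L t).
  { intros t [p1 [p2 [H1 [H2 ->]]]]. apply principal_mul; auto. }
  assert (Hc' : c <== sup S) by (eapply ltr; eauto).
  destruct (compact_below_principals c S Hc HSp Hc') as [|[t [[p1 [p2 [H1 [H2 ->]]]] [Ht1 Ht2]]]]; auto.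
  right. exists p1, p2. split; auto. split; auto. split. rewrite E1; apply lsub; auto.
  split. rewrite E2; apply lsub; auto. split; auto.
Qed.

Lemma loc_closed_le a x : a <== lc x -> lc a <== lc x.
Proof. intros; rewrite <- (loc_idem x); apply loc_mono; auto. Qed.
Lemma lc_mul_mono x y x' y' : lc x <== lc x' -> lc y <== lc y' -> lc (x ** y) <== lc (x' ** y').
Proof.
  intros H1 H2. rewrite <- (loc_mul_loc x y), <- (loc_mul_loc x' y'). apply loc_mono, mul_mono; auto.
Qed.
Lemma lc_mul_eq x y x' y' : lc x = lc x' -> lc y = lc y' -> lc (x ** y) = lc (x' ** y').
Proof. intros H1 H2. rewrite <- (loc_mul_loc x y), <- (loc_mul_loc x' y'), H1, H2; auto. Qed.
Lemma lc_pw_mono x y n : lc x <== lc y -> lc (pw x n) <== lc (pw y n).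
Proof. intros H; induction n; simpl. apply lr. apply lc_mul_mono; auto. Qed.
Lemma lc_pw_eq x y n : lc x = lc y -> lc (pw x n) = lc (pw y n).
Proof. intros H; apply las; apply lc_pw_mono; rewrite H; apply lr. Qed.
Lemma le_m_loc a : principal L a -> (a <== m <-> lc a <> one).
Proof.
  intros Ha. split.
  - intros H E. apply m_ne1. apply ge1. rewrite <- E. apply loc_le_m; auto.
  - intros H. apply NNPP; intros Hn. apply H. apply loc_unit, unit_principal; auto.
Qed.
Lemma pw_le_m a n : a <== m -> (1 <= n)%nat -> pw a n <== m.
Proof. intros H Hn. destruct n. lia. simpl. eapply ltr; [apply mulle_l| auto]. Qed.

Lemma loc_arch y x : principal L y -> y <== m -> NP x -> exists n, ~ lc x <== lc (pw y n).
Proof.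
  intros Hy Hym [Hx Hx0]. apply NNPP; intros Hn'.
  assert (Hn : forall n, lc x <== lc (pw y n)).
  { intros n. apply NNPP; intros H; apply Hn'; eauto. }
  clear Hn'.
  assert (Hy0 : y <> zero L).
  { intros E. apply (loc_nz x Hx0). apply lez. eapply ltr; [apply (Hn 1%nat)|]. simpl.
    rewrite E, mul0l, loc_zero. apply lr. }
  assert (HNy : NP y) by (split; auto).
  set (P := sup (fun a => forall n, a <== lc (pw y n))).
  assert (HP : forall n, P <== lc (pw y n)) by (intros n; apply supl; auto).
  set (C := lc x).
  assert (HPC : P ** colon L C P <== C) by (rewrite mulC; apply colon_mul).
  destruct (Hsh _ _ _ HPC) as [b1 [b2 [H1 [H2 EC]]]].
  assert (Hxc : lcompact L x) by (apply principal_compact; auto).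
  destruct (extract x b1 b2 Hxc) as [E|[p1 [p2 [Hp1 [Hp2 [Hpb1 [Hpb2 [HN12 Hx12]]]]]]]].
  { rewrite <- EC. apply loc_ge. }
  { contradiction. }
  assert (Epp : lc (p1 ** p2) = lc x).
  { apply las; auto. apply loc_closed_le. fold C. rewrite EC. apply mul_mono; auto. }
  assert (Hp10 : p1 <> zero L) by (intros E; apply (proj2 HN12); rewrite E, mul0l; auto).
  assert (Hp20 : p2 <> zero L) by (intros E; apply (proj2 HN12); rewrite E, mul0; auto).
  assert (HA : forall k, p1 <== lc (pw y k)).
  { intros k. destruct (loc_div x (pw y k) (conj Hx Hx0) (NP_pw y k HNy) (Hn k)) as [r [[Hr Hr0] Er]].
    assert (Hr2 : r <== b2).
    { eapply ltr; [|apply H2]. apply colon_in.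
      eapply ltr; [apply mulr_mono, (HP k)|].
      eapply ltr; [apply mull_mono, loc_ge|].
      eapply ltr; [apply loc_mul|]. rewrite Er; apply lr. }
    apply (loc_cancel p1 (pw y k) r); auto. rewrite (mulC _ (pw y k)), Er.
    apply loc_closed_le. fold C. rewrite EC. apply mul_mono; auto. }
  assert (HB : forall t, t <== P -> t <== lc p1).
  { intros t Ht. apply (loc_cancel t p1 p2); auto. rewrite Epp.
    apply loc_closed_le. fold C. rewrite EC. apply mul_mono; auto. eapply ltr; eauto. }
  assert (Hp1y : lc p1 <== lc y).
  { apply loc_closed_le. eapply ltr; [apply (HA 1%nat)|]. simpl. rewrite mul1r. apply lr. }
  destruct (loc_div p1 y (conj Hp1 Hp10) HNy Hp1y) as [t [[Ht Ht0] Et]].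
  assert (HtP : t <== P).
  { apply lsub. intros k. apply (loc_cancel t (pw y k) y); auto. rewrite Et.
    rewrite (mulC _ (pw y k)). change (y ** pw y k) with (pw y (S k)). apply loc_closed_le; auto. }
  assert (Hone : one <== lc y).
  { apply (loc_cancel one y t); auto. rewrite mul1, (mulC _ y), Et. apply loc_closed_le; auto. }
  apply (le_m_loc y Hy); auto. apply ge1; auto.
Qed.

Lemma loc_root a b n : NP a -> NP b -> (1 <= n)%nat -> lc (pw a n) <== lc (pw b n) -> lc a <== lc b.
Proof.
  intros Ha Hb Hn H. apply NNPP; intros Hab.
  destruct (loc_total a b Ha Hb) as [|Hba]; [contradiction|].
  destruct (loc_div b a Hb Ha Hba) as [r [[Hr Hr0] Er]].
  assert (Hrm : r <== m).
  { apply NNPP; intros Hrm. apply Hab. rewrite <- Er, mulC, loc_mul_unit. apply lr.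
    apply unit_principal; auto. }
  assert (E2 : lc (pw b n) = lc (pw r n ** pw a n)).
  { rewrite <- pw_mul. apply lc_pw_eq; auto. }
  rewrite E2 in H.
  assert (H1 : one <== lc (pw r n)).
  { apply (loc_cancel one (pw r n) (pw a n)). apply principal_pw, (proj1 Ha).
    apply (pw_nz Hdom), (proj2 Ha). rewrite mul1; auto. }
  apply (le_m_loc (pw r n)). apply principal_pw; auto. apply pw_le_m; auto. apply ge1; auto.
Qed.

Lemma loc_pw_strict a j k : NP a -> a <== m -> lc (pw a j) <== lc (pw a k) -> (k <= j)%nat.
Proof.
  intros [Ha Ha0] Ham H. destruct (Nat.le_gt_cases k j) as [|Hjk]; auto. exfalso.
  replace k with (j + (k - j))%nat in H by lia. rewrite pw_add, mulC in H.
  assert (H1 : one <== lc (pw a (k - j))).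
  { apply (loc_cancel one _ (pw a j)). apply principal_pw; auto. apply (pw_nz Hdom); auto. rewrite mul1; auto. }
  apply (le_m_loc (pw a (k - j))). apply principal_pw; auto. apply pw_le_m; auto. lia. apply ge1; auto.
Qed.

Section Val.
Local Open Scope R_scope.
Variable e : L.
Hypothesis He : NP e.
Hypothesis Hem : e <== m.

Definition K a n k := lc (pw a n) <== lc (pw e k).
Definition Vset a := fun r : R => exists n k, (1 <= n)%nat /\ K a n k /\ r = INR k / INR n.
Definition v a : R := epsilon (inhabits 0) (fun r => is_lub (Vset a) r).

Lemma K0 a n : K a n 0.
Proof. unfold K. simpl. rewrite loc_one. apply l1. Qed.

Lemma K_root a n k : NP a -> (1 <= n)%nat -> forall n' k', (1 <= n')%nat -> K a n' k' ->
  (k * n' <= k' * n)%nat -> K a n k.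
Proof.
  intros Ha Hn n' k' Hn' HK Hk.
  apply (lc_pw_mono _ _ n) in HK. rewrite !pw_pw in HK.
  apply (loc_root (pw a n) (pw e k) n'); auto using NP_pw.
  rewrite !pw_pw. eapply ltr; [|apply loc_mono, pw_anti; apply Hk].
  rewrite Nat.mul_comm; auto.
Qed.

Lemma v_bound a : NP a -> exists N : nat, forall n k, (1 <= n)%nat -> K a n k -> INR k / INR n <= INR N.
Proof.
  intros Ha. destruct (loc_arch e a (proj1 He) Hem Ha) as [N HN]. exists N.
  intros n k Hn HK. destruct (Nat.le_gt_cases (n * N) k) as [Hk|Hk].
  - exfalso. apply HN. pose proof (K_root a 1 N Ha (le_n 1) n k Hn HK) as X.
    unfold K in X. simpl pw at 1 in X. rewrite mul1r in X. apply X. lia.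
  - assert (0 < INR n) by (apply INR_pos1; auto).
    apply (Rmult_le_reg_r (INR n)); auto. unfold Rdiv. rewrite Rmult_assoc, Rinv_l, Rmult_1_r by lra.
    rewrite <- mult_INR. apply le_INR. lia.
Qed.

Lemma v_spec a : NP a -> is_lub (Vset a) (v a).
Proof.
  intros Ha. unfold v. apply epsilon_spec.
  destruct (v_bound a Ha) as [N HN].
  destruct (completeness (Vset a)) as [r Hr].
  - exists (INR N). intros r [n [k [Hn [HK ->]]]]. apply HN; auto.
  - exists 0. exists 1%nat, 0%nat. split; auto. split. apply K0. simpl. lra.
  - exists r; auto.
Qed.

Lemma vF1 a n k : NP a -> (1 <= n)%nat -> K a n k -> INR k / INR n <= v a.
Proof. intros Ha Hn HK. apply (v_spec a Ha). exists n, k; auto. Qed.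

Lemma vF2 a n k : NP a -> (1 <= n)%nat -> ~ K a n k -> v a <= INR k / INR n.
Proof.
  intros Ha Hn HK. apply (v_spec a Ha). intros r [n' [k' [Hn' [HK' ->]]]].
  apply frac_le. apply INR_pos1; auto. apply INR_pos1; auto.
  rewrite <- !mult_INR. apply le_INR.
  destruct (Nat.le_gt_cases (k' * n) (k * n')) as [|Hlt]; auto.
  exfalso. apply HK. apply (K_root a n k Ha Hn n' k' Hn' HK'). lia.
Qed.

Lemma vF3 a n : NP a -> (1 <= n)%nat -> exists k, K a n k /\ ~ K a n (S k).
Proof.
  intros Ha Hn. destruct (loc_arch e (pw a n) (proj1 He) Hem (NP_pw a n Ha)) as [N HN].
  apply (nat_step (K a n) N). apply K0. auto.
Qed.

Lemma v_nonneg a : NP a -> 0 <= v a.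
Proof. intros Ha. eapply Rle_trans; [|apply (vF1 a 1 0); auto using K0]. simpl; lra. Qed.

Lemma v_anti a b : NP a -> NP b -> lc a <== lc b -> v b <= v a.
Proof.
  intros Ha Hb H. apply (v_spec b Hb). intros r [n [k [Hn [HK ->]]]].
  apply (vF1 a n k Ha Hn). unfold K in *. eapply ltr; [|apply HK]. apply lc_pw_mono; auto.
Qed.
Lemma v_congr a b : NP a -> NP b -> lc a = lc b -> v a = v b.
Proof. intros Ha Hb E. apply Rle_antisym; apply v_anti; auto; rewrite E; apply lr. Qed.

Lemma v_mul a b : NP a -> NP b -> v (a ** b) = v a + v b.
Proof.
  intros Ha Hb. assert (Hab : NP (a ** b)) by (apply NP_mul; auto).
  assert (Hd : v (a ** b) - (v a + v b) = 0).
  { apply small_zero. intros n Hn.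
    destruct (vF3 a n Ha Hn) as [ka [Ka Ka']]. destruct (vF3 b n Hb Hn) as [kb [Kb Kb']].
    assert (H1 : K (a ** b) n (ka + kb)).
    { unfold K in *. rewrite pw_mul, pw_add. apply lc_mul_mono; auto. }
    assert (H2 : ~ K (a ** b) n (S (S (ka + kb)))).
    { intros H. unfold K in *.
      assert (Ta : lc (pw e (S ka)) <== lc (pw a n)).
      { destruct (loc_total (pw e (S ka)) (pw a n)) as [|X]; auto using NP_pw. contradiction. }
      assert (Tb : lc (pw e (S kb)) <== lc (pw b n)).
      { destruct (loc_total (pw e (S kb)) (pw b n)) as [|X]; auto using NP_pw. contradiction. }
      apply Ka'. apply (loc_cancel' _ _ (pw b n)). apply principal_pw, (proj1 Hb).
      apply (pw_nz Hdom), (proj2 Hb).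
      rewrite <- pw_mul. eapply ltr; [apply H|].
      replace (S (S (ka + kb))) with (S ka + S kb)%nat by lia. rewrite pw_add.
      apply lc_mul_mono; auto. apply lr. }
    pose proof (vF1 a n ka Ha Hn Ka). pose proof (vF2 a n (S ka) Ha Hn Ka').
    pose proof (vF1 b n kb Hb Hn Kb). pose proof (vF2 b n (S kb) Hb Hn Kb').
    pose proof (vF1 _ n _ Hab Hn H1). pose proof (vF2 _ n _ Hab Hn H2).
    rewrite !S_INR, plus_INR in *. assert (0 < INR n) by (apply INR_pos1; auto).
    unfold Rdiv in *. apply Rabs_le. split; nra. }
  lra.
Qed.

Lemma v_one : v one = 0.
Proof. pose proof (v_mul one one NP_one NP_one). rewrite mul1 in H. lra. Qed.
Lemma v_pw a n : NP a -> v (pw a n) = INR n * v a.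
Proof.
  intros Ha. induction n. simpl. rewrite v_one; lra.
  simpl pw. rewrite v_mul, IHn, S_INR; auto using NP_pw. lra.
Qed.
Lemma v_pos a : NP a -> a <== m -> 0 < v a.
Proof.
  intros Ha Ham. destruct (loc_arch a e (proj1 Ha) Ham He) as [N HN].
  destruct N. { exfalso; apply HN. simpl. rewrite loc_one. apply l1. }
  assert (HK : K a (S N) 1).
  { destruct (loc_total e (pw a (S N)) He (NP_pw _ _ Ha)) as [|X]. contradiction.
    unfold K. simpl pw at 2. rewrite mul1r. auto. }
  eapply Rlt_le_trans; [|apply (vF1 a (S N) 1 Ha); auto; lia].
  simpl INR at 1. assert (0 < INR (S N)) by (apply INR_pos1; lia). unfold Rdiv.
  rewrite Rmult_1_l. apply Rinv_0_lt_compat; auto.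
Qed.
Lemma v_strict a b : NP a -> NP b -> ~ lc a <== lc b -> v a < v b.
Proof.
  intros Ha Hb H. destruct (loc_total a b Ha Hb) as [|Hba]. contradiction.
  destruct (loc_div b a Hb Ha Hba) as [r [Hr Er]].
  assert (Hrm : r <== m).
  { apply NNPP; intros Hrm. apply H. rewrite <- Er, mulC, loc_mul_unit. apply lr.
    apply unit_principal; auto. apply Hr. }
  rewrite <- (v_congr _ _ (NP_mul _ _ Hr Ha) Hb Er), v_mul; auto.
  pose proof (v_pos r Hr Hrm). lra.
Qed.
Lemma v_le_iff a b : NP a -> NP b -> (lc a <== lc b <-> v b <= v a).
Proof.
  intros Ha Hb. split. apply v_anti; auto.
  intros H. apply NNPP; intros Hn. pose proof (v_strict a b Ha Hb Hn). lra.
Qed.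
Lemma v_unit a : NP a -> ~ a <== m -> v a = 0.
Proof.
  intros Ha Ham. rewrite <- v_one. apply v_congr; auto using NP_one.
  rewrite loc_one. apply loc_unit, unit_principal; auto. apply Ha.
Qed.
Lemma le_eps (p q : R) : (forall eps, 0 < eps -> p <= q + eps) -> p <= q.
Proof.
  intros H. apply NNPP; intros Hn. specialize (H ((p - q) / 2)). lra.
Qed.

Section RCase.
Hypothesis Hnd : forall t, NP t -> t <== m -> exists t', NP t' /\ t' <== m /\ ~ lc t' <== lc t.

Lemma D1 eps : 0 < eps -> exists a, NP a /\ a <== m /\ v a < eps.
Proof.
  intros Heps.
  destruct (glb_exists (fun r => exists a, NP a /\ a <== m /\ v a = r)) as [g [Hg1 Hg2]].
  { exists (v e); exists e; auto. }
  { intros r [a [Ha [_ <-]]]. apply v_nonneg; auto. }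
  assert (Hg0 : g <= 0).
  { apply NNPP; intros Hgp.
    destruct (classic (exists a, NP a /\ a <== m /\ v a < 2 * g)) as [[a [Ha [Ham Hva]]]|Hno].
    - destruct (Hnd a Ha Ham) as [t [Ht [Htm Hta]]].
      pose proof (v_strict t a Ht Ha Hta) as Hlt.
      assert (Hat : lc a <== lc t) by (apply (v_le_iff a t Ha Ht); lra).
      destruct (loc_div a t Ha Ht Hat) as [r [Hr Er]].
      assert (Ev : v a = v r + v t) by (rewrite <- (v_congr _ _ (NP_mul _ _ Hr Ht) Ha Er), v_mul; auto).
      assert (Hrm : r <== m).
      { apply NNPP; intros Hrm. rewrite (v_unit r Hr Hrm) in Ev. lra. }
      assert (g <= v r) by (apply Hg1; exists r; auto).
      assert (g <= v t) by (apply Hg1; exists t; auto). lra.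
    - assert (2 * g <= g).
      { apply Hg2. intros r [a [Ha [Ham <-]]]. apply NNPP; intros X. apply Hno. exists a.
        split; auto. split; auto. lra. }
      lra. }
  apply NNPP; intros Hno. assert (eps <= g).
  { apply Hg2. intros r [a [Ha [Ham <-]]]. apply NNPP; intros X. apply Hno. exists a.
    split; auto. split; auto. lra. }
  lra.
Qed.

Lemma D2 r1 r2 : 0 <= r1 -> r1 < r2 -> exists a, NP a /\ r1 < v a < r2.
Proof.
  intros H0 H12. destruct (D1 (r2 - r1)) as [a0 [Ha0 [Ha0m Hva0]]]. lra.
  pose proof (v_pos a0 Ha0 Ha0m) as Hd. set (d := v a0) in *.
  destruct (INR_unbounded (r1 / d)) as [N HN].
  destruct (nat_step (fun k => INR k * d <= r1) N) as [k [Hk1 Hk2]].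
  { simpl. lra. }
  { intros X. assert (INR N > r1 / d) by auto.
    assert (r1 / d * d = r1) by (field; lra). nra. }
  exists (pw a0 (S k)). split. apply NP_pw; auto. rewrite v_pw; auto. fold d. rewrite S_INR in *. lra.
Qed.

Lemma v_unbounded r : exists c, NP c /\ r < v c.
Proof.
  pose proof (v_pos e He Hem). destruct (INR_unbounded (r / v e)) as [N HN].
  exists (pw e N). split. apply NP_pw; auto. rewrite v_pw; auto.
  assert (r / v e * v e = r) by (field; lra). nra.
Qed.

Lemma D4 r : 0 <= r -> exists p, NP p /\ v p = r.
Proof.
  intros Hr. destruct (Req_dec r 0) as [->|Hr0]. exists one; split; auto using NP_one, v_one.
  destruct (v_unbounded r) as [c [Hc Hvc]].
  set (A := sup (fun x => NP x /\ r < v x)).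
  set (B := sup (fun y => NP y /\ v c - r < v y)).
  assert (HAB : A ** B <== lc c).
  { unfold B. apply mul_sup_le. intros y [Hy Hvy]. rewrite mulC. unfold A. apply mul_sup_le.
    intros x [Hx Hvx]. eapply ltr; [apply loc_ge|]. apply (v_le_iff _ _ (NP_mul _ _ Hy Hx) Hc).
    rewrite v_mul; auto. lra. }
  destruct (Hsh _ _ _ HAB) as [b1 [b2 [H1 [H2 Ec]]]].
  destruct (extract c b1 b2) as [E|[p1 [p2 [Hp1 [Hp2 [Hpb1 [Hpb2 [HN12 Hc12]]]]]]]].
  apply principal_compact; auto. apply Hc. rewrite <- Ec; apply loc_ge.
  exfalso; apply (proj2 Hc); auto.
  assert (HN1 : NP p1) by (split; auto; intros E; apply (proj2 HN12); rewrite E, mul0l; auto).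
  assert (HN2 : NP p2) by (split; auto; intros E; apply (proj2 HN12); rewrite E, mul0; auto).
  assert (Ev : v p1 + v p2 = v c).
  { rewrite <- v_mul; auto. apply v_congr; auto. apply las; auto.
    apply loc_closed_le. rewrite Ec. apply mul_mono; auto. }
  assert (Hv2 : v c - r <= v p2).
  { apply le_eps. intros eps Heps. destruct (D2 r (r + eps)) as [x [Hx Hvx]]; try lra.
    assert (Hxp : lc (x ** p2) <== lc c).
    { apply loc_closed_le. rewrite Ec. apply mul_mono; auto. eapply ltr; [|apply H1].
      apply lsub. split; auto; lra. }
    apply (v_le_iff _ _ (NP_mul _ _ Hx HN2) Hc) in Hxp. rewrite v_mul in Hxp; auto. lra. }
  assert (Hv1 : r <= v p1).
  { apply le_eps. intros eps Heps. destruct (D2 (v c - r) (v c - r + eps)) as [y [Hy Hvy]]; try lra.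
    assert (Hyp : lc (p1 ** y) <== lc c).
    { apply loc_closed_le. rewrite Ec. apply mul_mono; auto. eapply ltr; [|apply H2].
      apply lsub. split; auto; lra. }
    apply (v_le_iff _ _ (NP_mul _ _ HN1 Hy) Hc) in Hyp. rewrite v_mul in Hyp; auto. lra. }
  exists p1. split; auto. lra.
Qed.
Definition fR (z : L) : Rbar -> Prop := fun (q : Rbar) =>
  match q with
  | Finite q0 => exists a, NP a /\ a <== z /\ v a <= q0
  | p_infty => True
  | m_infty => False
  end.

Lemma pext (P Q : Prop) : (P <-> Q) -> P = Q.
Proof. apply propositional_extensionality. Qed.

Lemma fR_in z : R1_in (fR z).
Proof.
  destruct (classic (exists a, NP a /\ a <== z)) as [[a0 [Ha0 Ha0z]]|Hno].
  - destruct (glb_exists (fun r => exists a, NP a /\ a <== z /\ v a = r)) as [g [Hg1 Hg2]].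
    { exists (v a0), a0; auto. }
    { intros r [a [Ha [_ <-]]]. apply v_nonneg; auto. }
    assert (Hg0 : 0 <= g).
    { apply Hg2. intros r [a [Ha [_ <-]]]. apply v_nonneg; auto. }
    destruct (classic (exists a, NP a /\ a <== z /\ v a = g)) as [[a1 [Ha1 [Ha1z Ea1]]]|Hna].
    + right; left. exists g. split; auto. apply functional_extensionality. intros [t| |]; simpl; apply pext.
      * split. intros [a [Ha [Haz Hvt]]]. assert (g <= v a) by (apply Hg1; exists a; auto). lra.
        intros Ht. exists a1. split; auto. split; auto. lra.
      * tauto.
      * tauto.
    + left. exists g. split; auto. apply functional_extensionality. intros [t| |]; simpl; apply pext.
      * split. intros [a [Ha [Haz Hvt]]]. assert (g <= v a) by (apply Hg1; exists a; auto).
        destruct (Req_dec (v a) g) as [E|E]. exfalso; apply Hna; exists a; auto. lra.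
        intros Ht. apply NNPP; intros X. assert (t <= g).
        { apply Hg2. intros r [a [Ha [Haz <-]]]. apply NNPP; intros Y. apply X. exists a.
          split; auto. split; auto. lra. }
        lra.
      * tauto.
      * tauto.
  - right; right. apply functional_extensionality. intros [t| |]; simpl; apply pext.
    + split. intros [a [Ha [Haz _]]]. exfalso; apply Hno; eauto. discriminate.
    + tauto.
    + split. tauto. discriminate.
Qed.

Lemma fR_le x y : R1_le (fR (lc x)) (fR (lc y)) <-> lc x <== lc y.
Proof.
  split.
  - intros H. destruct (HPG (lc x)) as [S [HS ES]]. rewrite ES. apply supl. intros b Hb.
    destruct (classic (b = zero L)) as [->|Hb0]. apply z0.
    assert (HNb : NP b) by (split; auto).
    assert (Hbx : b <== lc x) by (rewrite ES; apply lsub; auto).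
    destruct (H (Finite (v b))) as [a [Ha [Hay Hva]]]. exists b. split; auto. split; auto. lra.
    eapply ltr; [apply loc_ge|]. eapply ltr; [apply (v_le_iff b a HNb Ha); auto|].
    apply loc_closed_le; auto.
  - intros H [t| |]; simpl; auto. intros [a [Ha [Hax Hva]]]. exists a. split; auto. split; auto.
    eapply ltr; eauto.
Qed.

Lemma fR_mul x y : fR (lc (lc x ** lc y)) = R1_mul (fR (lc x)) (fR (lc y)).
Proof.
  apply functional_extensionality. intros t. apply pext. unfold R1_mul. destruct t as [t| |]; simpl.
  - split.
    + intros [c [Hc [Hcxy Hvc]]].
      destruct (loc_compact c (lc x ** lc y)) as [s [Hs Hcs]]. apply principal_compact; auto; apply Hc. auto.
      assert (Hs0 : s <> zero L) by (intros E; apply (proj2 Hs); rewrite E; apply z0).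
      destruct (extract (c ** s) (lc x) (lc y)) as [E|[p1 [p2 [Hp1 [Hp2 [Hpb1 [Hpb2 [HN12 H12]]]]]]]].
      apply HC; auto. apply principal_compact; auto; apply Hc. apply Hs. auto.
      exfalso; apply (mul_nz Hdom c s); auto. apply Hc.
      rewrite loc_mul_unit in H12; auto.
      assert (HN1 : NP p1) by (split; auto; intros E; apply (proj2 HN12); rewrite E, mul0l; auto).
      assert (HN2 : NP p2) by (split; auto; intros E; apply (proj2 HN12); rewrite E, mul0; auto).
      apply (v_le_iff _ _ Hc HN12) in H12. rewrite v_mul in H12; auto.
      exists (Finite (v p1)), (Finite (t - v p1)). split. exists p1. split; auto. split; auto. lra.
      split. exists p2. split; auto. split; auto. lra. simpl. f_equal. lra.
    + intros [a [b [Ha [Hb Et]]]]. destruct a as [a| |]; destruct b as [b| |]; simpl in *; try discriminate; try contradiction.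
      injection Et as Et. destruct Ha as [a1 [Ha1 [Ha1x Hva1]]]. destruct Hb as [b1 [Hb1 [Hb1y Hvb1]]].
      exists (a1 ** b1). split. apply NP_mul; auto. split. eapply ltr; [|apply loc_ge]. apply mul_mono; auto.
      rewrite v_mul; auto. lra.
  - split; auto. intros _. exists p_infty, p_infty. simpl. auto.
  - split. tauto. intros [a [b [Ha [Hb Et]]]]. destruct a as [a| |]; destruct b as [b| |]; simpl in *;
      try discriminate; try contradiction.
Qed.

Lemma fR_surj A : R1_in A -> exists x, fR (lc x) = A.
Proof.
  intros [[r [Hr ->]]|[[r [Hr ->]]| ->]].
  - exists (sup (fun a => NP a /\ r < v a)). apply functional_extensionality. intros [t| |]; simpl; apply pext.
    + split.
      * intros [a [Ha [Hax Hvt]]].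
        destruct (loc_compact a _ (principal_compact Hdom HC a (proj1 Ha)) Hax) as [s [Hs Has]].
        destruct (compact_below_principals (a ** s) _ (HC_mul a s Ha Hs) (fun t Ht => proj1 (proj1 Ht)) Has)
          as [E|[b [[Hb Hvb] [_ Hab]]]].
        exfalso. apply (mul_nz Hdom a s); auto. apply Ha. intros E'; apply (proj2 Hs); rewrite E'; apply z0.
        rewrite loc_mul_unit in Hab; auto. apply (v_le_iff _ _ Ha Hb) in Hab. lra.
      * intros Ht. destruct (D2 r t) as [b [Hb Hvb]]; auto.
        exists b. split; auto. split. eapply ltr; [|apply loc_ge]. apply lsub. split; auto; lra. lra.
    + tauto.
    + tauto.
  - destruct (D4 r Hr) as [p [Hp Ep]]. exists p. apply functional_extensionality. intros [t| |]; simpl; apply pext.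
    + split.
      * intros [a [Ha [Hap Hvt]]]. apply loc_closed_le in Hap.
        apply (v_le_iff _ _ Ha Hp) in Hap. lra.
      * intros Ht. exists p. split; auto. split. apply loc_ge. lra.
    + tauto.
    + tauto.
  - exists (zero L). rewrite loc_zero. apply functional_extensionality. intros [t| |]; simpl; apply pext.
    + split. intros [a [Ha [Ha0 _]]]. exfalso; apply (proj2 Ha); apply lez; auto. discriminate.
    + tauto.
    + split. tauto. discriminate.
Qed.

End RCase.

End Val.

Section ZCase.
Variable pi0 : L.
Hypothesis Hpi : NP pi0.
Hypothesis Hpim : pi0 <== m.
Hypothesis Hdisc : forall t, NP t -> t <== m -> lc t <== lc pi0.

Lemma pi_pow a : NP a -> exists k, lc a = lc (pw pi0 k).
Proof.
  intros Ha. destruct (loc_arch pi0 a (proj1 Hpi) Hpim Ha) as [N HN].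
  destruct (nat_step (fun k => lc a <== lc (pw pi0 k)) N) as [k [Hk1 Hk2]]; auto.
  simpl. rewrite loc_one; apply l1.
  destruct (loc_div a (pw pi0 k) Ha (NP_pw _ _ Hpi) Hk1) as [r [Hr Er]].
  destruct (classic (r <== m)) as [Hrm|Hrm].
  - exfalso. apply Hk2. rewrite <- Er. simpl pw. apply lc_mul_mono; auto. apply lr.
  - exists k. rewrite <- Er, mulC. apply loc_mul_unit, unit_principal; auto. apply Hr.
Qed.
Lemma pi_exp j k : lc (pw pi0 j) <== lc (pw pi0 k) <-> (k <= j)%nat.
Proof. split. apply loc_pw_strict; auto. intros; apply loc_mono, pw_anti; auto. Qed.

Definition minD (z : L) : nat :=
  epsilon (inhabits 0%nat) (fun k => pw pi0 k <== z /\ forall j, pw pi0 j <== z -> (k <= j)%nat).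
Lemma minD_spec z : (exists k, pw pi0 k <== z) ->
  pw pi0 (minD z) <== z /\ forall j, pw pi0 j <== z -> (minD z <= j)%nat.
Proof.
  intros H. unfold minD. apply epsilon_spec. apply (least_exists (fun k => pw pi0 k <== z)); auto.
Qed.
Definition fZ (z : L) : option Z :=
  if excluded_middle_informative (exists k, pw pi0 k <== z) then Some (- Z.of_nat (minD z))%Z else None.

Lemma D_sub x y : (forall k, pw pi0 k <== lc x -> pw pi0 k <== lc y) -> lc x <== lc y.
Proof.
  intros H. destruct (HPG (lc x)) as [S [HS ES]]. rewrite ES. apply supl. intros b Hb.
  destruct (classic (b = zero L)) as [->|Hb0]. apply z0.
  assert (Hbx : b <== lc x) by (rewrite ES; apply lsub; auto).
  destruct (pi_pow b (conj (HS b Hb) Hb0)) as [k Ek].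
  eapply ltr; [apply loc_ge|]. rewrite Ek. apply loc_closed_le. apply H.
  eapply ltr; [apply loc_ge|]. rewrite <- Ek. apply loc_closed_le; auto.
Qed.
Lemma D_empty x : ~ (exists k, pw pi0 k <== lc x) -> lc x = zero L.
Proof.
  intros H. apply las; [|apply z0]. rewrite <- loc_zero. apply D_sub. intros k Hk. exfalso; eauto.
Qed.
Lemma D_zero k : ~ pw pi0 k <== zero L.
Proof. intros H. apply (proj2 (NP_pw _ k Hpi)). apply lez; auto. Qed.

Lemma fZ_in x : Zm_in (fZ (lc x)).
Proof. unfold fZ. destruct excluded_middle_informative; simpl; auto. lia. Qed.

Lemma fZ_le x y : Zm_le (fZ (lc x)) (fZ (lc y)) <-> lc x <== lc y.
Proof.
  unfold fZ. destruct (excluded_middle_informative (exists k, pw pi0 k <== lc x)) as [Hx|Hx];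
  destruct (excluded_middle_informative (exists k, pw pi0 k <== lc y)) as [Hy|Hy]; simpl.
  - destruct (minD_spec _ Hx) as [Hx1 Hx2]. destruct (minD_spec _ Hy) as [Hy1 Hy2]. split.
    + intros H. apply D_sub. intros k Hk. eapply ltr; [apply pw_anti|apply Hy1].
      specialize (Hx2 k Hk). lia.
    + intros H. specialize (Hy2 _ (ltr _ _ _ Hx1 H)). lia.
  - split. tauto. intros H. apply Hy. destruct Hx as [k Hk]. exists k. eapply ltr; eauto.
  - split; auto. intros _. rewrite (D_empty x Hx). apply z0.
  - split; auto. intros _. rewrite (D_empty x Hx). apply z0.
Qed.

Lemma fZ_mul x y : fZ (lc (lc x ** lc y)) = Zm_mul (fZ (lc x)) (fZ (lc y)).
Proof.
  unfold fZ at 2 3.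
  destruct (excluded_middle_informative (exists k, pw pi0 k <== lc x)) as [Hx|Hx].
  2:{ unfold fZ. rewrite (D_empty x Hx), mul0l, loc_zero.
      destruct excluded_middle_informative as [[k Hk]|]; auto. exfalso; eapply D_zero; eauto. }
  destruct (excluded_middle_informative (exists k, pw pi0 k <== lc y)) as [Hy|Hy].
  2:{ unfold fZ. rewrite (D_empty y Hy), mul0, loc_zero.
      destruct excluded_middle_informative as [[k Hk]|]; auto. exfalso; eapply D_zero; eauto. }
  destruct (minD_spec _ Hx) as [Hx1 Hx2]. destruct (minD_spec _ Hy) as [Hy1 Hy2].
  set (i := minD (lc x)) in *. set (j := minD (lc y)) in *.
  assert (Hij : pw pi0 (i + j) <== lc (lc x ** lc y)).
  { rewrite pw_add. eapply ltr; [|apply loc_ge]. apply mul_mono; auto. }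
  assert (Hmin : forall k, pw pi0 k <== lc (lc x ** lc y) -> (i + j <= k)%nat).
  { intros k Hk. assert (HNk : NP (pw pi0 k)) by (apply NP_pw; auto).
    destruct (loc_compact _ _ (principal_compact Hdom HC _ (proj1 HNk)) Hk) as [s [Hs Hks]].
    destruct (extract _ _ _ (HC_mul _ _ HNk Hs) Hks) as [E|[p1 [p2 [Hp1 [Hp2 [Hpb1 [Hpb2 [HN12 H12]]]]]]]].
    { exfalso. apply (mul_nz Hdom (pw pi0 k) s); auto. apply HNk.
      intros E'; apply (proj2 Hs); rewrite E'; apply z0. }
    rewrite loc_mul_unit in H12; auto.
    assert (HN1 : NP p1) by (split; auto; intros E; apply (proj2 HN12); rewrite E, mul0l; auto).
    assert (HN2 : NP p2) by (split; auto; intros E; apply (proj2 HN12); rewrite E, mul0; auto).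
    destruct (pi_pow p1 HN1) as [k1 E1]. destruct (pi_pow p2 HN2) as [k2 E2].
    assert (Hk1 : (i <= k1)%nat).
    { apply Hx2. eapply ltr; [apply loc_ge|]. rewrite <- E1. apply loc_closed_le; auto. }
    assert (Hk2 : (j <= k2)%nat).
    { apply Hy2. eapply ltr; [apply loc_ge|]. rewrite <- E2. apply loc_closed_le; auto. }
    rewrite (lc_mul_eq _ _ _ _ E1 E2), <- pw_add in H12. apply pi_exp in H12. lia. }
  unfold fZ. destruct excluded_middle_informative as [Hxy|Hxy].
  - destruct (minD_spec _ Hxy) as [H1 H2]. specialize (H2 _ Hij). specialize (Hmin _ H1).
    simpl. f_equal. lia.
  - exfalso; eauto.
Qed.

Lemma fZ_surj (q : option Z) : Zm_in q -> exists x, fZ (lc x) = q.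
Proof.
  destruct q as [z|]; simpl; intros Ht.
  - exists (pw pi0 (Z.to_nat (- z))). set (n := Z.to_nat (- z)).
    assert (HD : forall k, pw pi0 k <== lc (pw pi0 n) <-> (n <= k)%nat).
    { intros k. split. intros H. apply loc_closed_le in H. apply pi_exp; auto.
      intros H. eapply ltr; [apply pw_anti; eauto| apply loc_ge]. }
    unfold fZ. destruct excluded_middle_informative as [Hx|Hx].
    + destruct (minD_spec _ Hx) as [H1 H2]. apply HD in H1.
      specialize (H2 n (proj2 (HD n) (le_n n))). f_equal. unfold n in *. lia.
    + exfalso. apply Hx. exists n. apply HD; auto.
  - exists (zero L). unfold fZ. rewrite loc_zero. destruct excluded_middle_informative as [[k Hk]|]; auto.
    exfalso; eapply D_zero; eauto.
Qed.
End ZCase.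

End Local.


Inductive tower {L : mlattice} (x : L) (g : L -> L) : L -> Prop :=
| tw0 : tower x g x
| twg : forall y, tower x g y -> tower x g (g y)
| tws : forall C : L -> Prop, (forall c, C c -> tower x g c) -> (exists c, C c) -> tower x g (sup C).

Section Zorn.
Context {L : mlattice}.
Hypothesis H1c : lcompact L one.
Variable x : L.
Hypothesis Hx : x <> one.
Variable g : L -> L.
Hypothesis Hg : forall y, y <== g y.
Notation T := (tower x g).

Lemma tw_ge y : T y -> x <== y.
Proof.
  induction 1. apply lr. eapply ltr; eauto. destruct H1 as [c Hc]. eapply ltr; [apply H0; eauto| apply lsub; auto].
Qed.
Definition extreme c := forall y, T y -> y <== c -> y <> c -> g y <== c.
Lemma tw_L1 c : T c -> extreme c -> forall y, T y -> y <== c \/ g c <== y.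
Proof.
  intros Tc Ec y Ty. induction Ty as [|y Ty IH|C HC IH Hne].
  - left. apply tw_ge; auto.
  - destruct IH as [H|H].
    + destruct (classic (y = c)) as [->|Hyc]. right; apply lr. left; apply Ec; auto.
    + right. eapply ltr; eauto.
  - destruct (classic (exists c', C c' /\ g c <== c')) as [[c' [Hc' Hgc]]|Hno].
    + right. eapply ltr; [apply Hgc| apply lsub; auto].
    + left. apply supl. intros c' Hc'. destruct (IH c' Hc'); auto. exfalso; eauto.
Qed.
Lemma tw_L2 c : T c -> extreme c.
Proof.
  intros Tc. induction Tc as [|c Tc IH|C HC IH Hne]; intros y Ty Hyc Hne'.
  - exfalso. apply Hne'. apply las; auto. apply tw_ge; auto.
  - destruct (tw_L1 c Tc IH y Ty) as [H|H].
    + destruct (classic (y = c)) as [->|Hyc']. apply lr. eapply ltr; [apply IH; auto| apply Hg].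
    + exfalso. apply Hne'. apply las; auto.
  - destruct (classic (forall c, C c -> g c <== y)) as [Hall|Hex].
    + exfalso. apply Hne'. apply las; auto. apply supl. intros c Hc. eapply ltr; [apply Hg| auto].
    + apply not_all_ex_not in Hex. destruct Hex as [c Hc]. apply imply_to_and in Hc. destruct Hc as [Hc Hgc].
      destruct (tw_L1 c (HC c Hc) (IH c Hc) y Ty) as [Hyc2|]; [|contradiction].
      destruct (classic (y = c)) as [->|Hyc3].
      * destruct (classic (exists c', C c' /\ g c <== c')) as [[c' [Hc' Hgc']]|Hno].
        -- eapply ltr; [apply Hgc'| apply lsub; auto].
        -- exfalso. apply Hne'. apply las; auto. apply supl. intros c' Hc'.
           destruct (tw_L1 c (HC c Hc) (IH c Hc) c' (HC c' Hc')); auto. exfalso; eauto.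
      * eapply ltr; [apply (IH c Hc); auto| apply lsub; auto].
Qed.
Lemma tw_chain a b : T a -> T b -> a <== b \/ b <== a.
Proof.
  intros Ta Tb. destruct (tw_L1 b Tb (tw_L2 b Tb) a Ta); auto. right. eapply ltr; [apply Hg| eauto].
Qed.
Lemma tw_list (C : L -> Prop) (l : list L) : (forall c, C c -> T c) -> (forall t, In t l -> C t) ->
  l <> nil -> exists c, C c /\ lsup l <== c.
Proof.
  intros HC. induction l as [|a l IH]; intros Hl Hne. contradiction.
  rewrite lsup_cons. destruct l as [|b l'].
  - exists a. split. apply Hl; left; auto. rewrite lsup_nil, joinz. apply lr.
  - destruct IH as [c [Hc Hlc]]. intros; apply Hl; right; auto. discriminate.
    assert (Ha : C a) by (apply Hl; left; auto).
    destruct (tw_chain a c (HC a Ha) (HC c Hc)) as [H|H].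
    + exists c. split; auto. apply joinle; auto.
    + exists a. split; auto. apply joinle. apply lr. eapply ltr; eauto.
Qed.
End Zorn.

Lemma exists_maximal {L : mlattice} (x : L) : lcompact L one -> x <> one -> exists m, maximal L m /\ x <== m.
Proof.
  intros H1c Hx. apply NNPP; intros Hno.
  set (P := fun y : L => x <== y /\ y <> one).
  set (g := fun y : L => epsilon (inhabits y) (fun z => y <== z /\ (P y -> z <> one /\ z <> y))).
  assert (Hgs : forall y, y <== g y /\ (P y -> g y <> one /\ g y <> y)).
  { intros y. unfold g. apply epsilon_spec.
    destruct (classic (P y)) as [Py|Py].
    - apply NNPP; intros Hn. apply Hno. exists y. split; [|apply Py]. split. apply Py.
      intros z Hz Hz1. apply NNPP; intros Hzy. apply Hn. exists z. split; auto.
    - exists y. split. apply lr. tauto. }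
  assert (Hg : forall y, y <== g y) by (intros; apply Hgs).
  assert (Hprop : forall y, tower x g y -> y <> one).
  { induction 1 as [|y Ty IH|C HC IH Hne].
    - auto.
    - apply (proj2 (Hgs y)). split; auto. apply tw_ge with (g := g); auto.
    - intros E. destruct (H1c C) as [l [Hl Hl1]]. rewrite E; apply lr.
      destruct l as [|a l].
      + change (@one L <== lsup nil) in Hl1. rewrite lsup_nil in Hl1. apply Hx. apply ge1. eapply ltr; [apply Hl1| apply z0].
      + destruct (tw_list x g Hg C (a :: l) HC Hl) as [c [Hc Hlc]]. discriminate.
        apply (IH c Hc). apply ge1. eapply ltr; eauto. }
  set (s := sup (tower x g)).
  assert (Ts : tower x g s) by (apply tws; auto; exists x; apply tw0).
  assert (Es : g s = s) by (apply las; [apply lsub; apply twg; auto| apply Hg]).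
  apply (proj2 (proj2 (Hgs s) (conj (tw_ge x g Hg s Ts) (Hprop s Ts)))). auto.
Qed.


Lemma loc_prime_le {L : mlattice} (m p : L) : prime L p -> p <== m -> loc L m p <== p.
Proof.
  intros Hp Hpm. apply supl. intros a [Ha [s [Hs1 [Hs2 Has]]]].
  destruct (proj2 Hp a s Has); auto. exfalso; apply Hs2; eapply ltr; eauto.
Qed.
Lemma prime_pw {L : mlattice} (p y : L) n : prime L p -> pw y n <== p -> y <== p.
Proof.
  intros Hp. induction n; simpl; intros H. exfalso; apply (proj1 Hp); apply ge1; auto.
  destruct (proj2 Hp y (pw y n) H); auto.
Qed.
Lemma PG_nz {L : mlattice} (x : L) : PG L -> x <> zero L -> exists a, NP a /\ a <== x.
Proof.
  intros HPG Hx. destruct (HPG x) as [S [HS ES]]. apply NNPP; intros Hno. apply Hx. apply lez.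
  rewrite ES. apply supl. intros a Ha. destruct (classic (a = zero L)) as [->|Ha0]. apply lr.
  exfalso. apply Hno. exists a. split. split; auto. rewrite ES; apply lsub; auto.
Qed.
Lemma PG_not_le {L : mlattice} (x p : L) : PG L -> ~ x <== p -> exists a, principal L a /\ a <== x /\ ~ a <== p.
Proof.
  intros HPG Hx. destruct (HPG x) as [S [HS ES]]. apply NNPP; intros Hno. apply Hx.
  rewrite ES. apply supl. intros a Ha. apply NNPP; intros Hap. apply Hno. exists a.
  split; auto. split; auto. rewrite ES; apply lsub; auto.
Qed.

Theorem theorem3p9 (L : mlattice) :
  ~ (forall x : L, x = zero L \/ x = one) ->
  C_lattice L ->
  sharp L ->
  domain L ->
  (forall x : L, exists S : L -> Prop,
      (forall a, S a -> principal L a) /\ x = sup S) ->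
  (forall m : L, maximal L m ->
      loc_iso L m Zm_in Zm_le Zm_mul \/ loc_iso L m R1_in R1_le R1_mul) /\
  (forall c : L, lcompact L c -> principal L c) /\
  (forall p : L, prime L p -> p <> zero L -> maximal L p).
Proof.
  intros Hnt HC Hsh Hdom HPG.
  split; [|split].
  - intros m Hmax. pose proof (maximal_prime m Hmax) as Hm.
    assert (Hm0 : m <> zero L).
    { intros E. apply Hnt. intros x. destruct (classic (x = one)) as [|Hx1]; auto. left.
      rewrite <- E. apply (proj2 Hmax); auto. rewrite E; apply z0. }
    destruct (PG_nz m HPG Hm0) as [e [He Hem]].
    destruct (classic (exists pi0, NP pi0 /\ pi0 <== m /\
                forall t, NP t -> t <== m -> loc L m t <== loc L m pi0)) as [[pi0 [Hpi [Hpim Hd]]]|Hnd].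
    + left. exists (fZ pi0). split; [|split; [|split]].
      * intros x. apply fZ_in.
      * intros q Hq. apply (fZ_surj Hdom HC m Hm pi0); auto.
      * intros x y. apply (fZ_le Hdom HC Hsh HPG m Hm pi0 Hpi Hpim Hd).
      * intros x y. apply (fZ_mul Hdom HC Hsh HPG m Hm pi0 Hpi Hpim Hd).
    + right.
      assert (Hnd' : forall t, NP t -> t <== m -> exists t', NP t' /\ t' <== m /\ ~ loc L m t' <== loc L m t).
      { intros t Ht Htm. apply NNPP; intros Hno. apply Hnd. exists t. split; auto. split; auto.
        intros t' Ht' Ht'm. apply NNPP; intros X. apply Hno. exists t'. auto. }
      exists (fR m e). split; [|split; [|split]].
      * intros x. apply (fR_in Hdom HC Hsh HPG m Hm e He Hem).
      * intros A HA. apply (fR_surj Hdom HC Hsh HPG m Hm e He Hem Hnd' A HA).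
      * intros x y. apply (fR_le Hdom HC Hsh HPG m Hm e He Hem).
      * intros x y. apply (fR_mul Hdom HC Hsh HPG m Hm e He Hem).
  - intros c Hc. apply (compact_principal Hdom Hsh HPG c Hc).
  - intros p Hp Hp0. split. apply Hp. intros x Hpx Hx1.
    apply NNPP; intros Hxp.
    assert (Hxp' : ~ x <== p) by (intros H; apply Hxp; apply las; auto).
    destruct (exists_maximal x (proj1 HC) Hx1) as [m [Hmax Hxm]].
    pose proof (maximal_prime m Hmax) as Hm.
    destruct (PG_not_le x p HPG Hxp') as [y [Hy [Hyx Hyp]]].
    destruct (PG_nz p HPG Hp0) as [x0 [Hx0 Hx0p]].
    assert (Hym : y <== m) by (eapply ltr; eauto).
    assert (Hy0 : y <> zero L) by (intros E; apply Hyp; rewrite E; apply z0).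
    destruct (loc_arch Hdom HC Hsh HPG m Hm y x0 Hy Hym Hx0) as [n Hn].
    assert (HNy : NP (pw y n)) by (apply NP_pw; auto; split; auto).
    destruct (loc_total Hdom HC Hsh m Hm x0 (pw y n) Hx0 HNy) as [|H]; [contradiction|].
    apply Hyp. apply (prime_pw p y n Hp).
    eapply ltr; [apply (loc_ge HC m Hm)|]. eapply ltr; [apply H|].
    eapply ltr; [apply (loc_mono HC m _ _ Hx0p)|]. apply loc_prime_le; auto.
    eapply ltr; eauto.
Qed.
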